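(* Fix $\gamma \in (\tfrac{2}{3},2)$. Let $x \in S_1^+(\mathrm{VI}_0) \setminus \{P_1^+(\mathrm{VI}_0)\}$. If $x$ does not lie in $\mathscr{F}_{\mathrm{VI}_0}$, then $\varphi^\tau(x) \to Q_1$ as $\tau \to -\infty$.
   Context: Set $q^* := \tfrac{3\gamma-2}{2} \in (0,2)$. On $\mathbb{R}^5$ with coordinates $(\Sigma_+,\Sigma_-,N_+,N_-,\Omega)$ consider the system (with $' = d/d\tau$) $\Sigma_+' = -(2-q)\Sigma_+ - 2N_-^2$, $\Sigma_-' = -(2-q)\Sigma_- - 2\sqrt{3}N_+N_-$, $N_+' = (q+2\Sigma_+)N_+ + 2\sqrt{3}\Sigma_- N_-$, $N_-' = (q+2\Sigma_+)N_- + 2\sqrt{3}\Sigma_- N_+$, $\Omega' = 2(q-q^* )\Omega$, where $q := 2(\Sigma_+^2+\Sigma_-^2) + q^*\Omega$. The phase space $B_1^+(\mathrm{VI}_0)$ is the set of points satisfying $\Omega + \Sigma_+^2 + \Sigma_-^2 + N_-^2 = 1$, $\Omega \ge 0$ and $N_- > |N_+|$; it is invariant, solutions exist for all $\tau$, and $\varphi^\tau(x)$ denotes the flow. The shear invariant set is $S_1^+(\mathrm{VI}_0) := B_1^+(\mathrm{VI}_0) \cap \{\Sigma_- = 0,\ N_+ = 0\}$. $P_1^+(\mathrm{VI}_0)$ is the equilibrium $(\Sigma_+,\Sigma_-,N_+,N_-,\Omega) = \big(-\tfrac{q^*}{2}, 0, 0, \tfrac12\sqrt{q^*(2-q^* )},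 1-\tfrac{q^*}{2}\big)$. $F$ is the equilibrium $(0,0,0,0,1)$, and $\mathscr{F}_{\mathrm{VI}_0}$ is the set of $x \in B_1^+(\mathrm{VI}_0)$ with $\varphi^\tau(x) \to F$ as $\tau \to -\infty$. $Q_1$ is the point $(1,0,0,0,0)$ (on the Kasner circle $\{\Sigma_+^2+\Sigma_-^2=1, N_\pm = 0, \Omega = 0\}$). *)

(* Defs.v *)
From Stdlib Require Import Reals Lra.
From Coquelicot Require Import Coquelicot.
Open Scope R_scope.

(* A point of R^5 with coordinates (Sigma_+, Sigma_-, N_+, N_-, Omega). *)
Record State := mkState { Sp : R; Sm : R; Np : R; Nm : R; Om : R }.

Definition qstar (g : R) : R := (3 * g - 2) / 2.

Definition qfun (g : R) (x : State) : R :=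
  2 * (Sp x ^ 2 + Sm x ^ 2) + qstar g * Om x.

Definition is_solution (g : R) (sol : R -> State) : Prop :=
  forall t : R,
    let x := sol t in let q := qfun g x in
    derivable_pt_lim (fun s => Sp (sol s)) t (- (2 - q) * Sp x - 2 * Nm x ^ 2) /\
    derivable_pt_lim (fun s => Sm (sol s)) t
      (- (2 - q) * Sm x - 2 * sqrt 3 * Np x * Nm x) /\
    derivable_pt_lim (fun s => Np (sol s)) t
      ((q + 2 * Sp x) * Np x + 2 * sqrt 3 * Sm x * Nm x) /\
    derivable_pt_lim (fun s => Nm (sol s)) t
      ((q + 2 * Sp x) * Nm x + 2 * sqrt 3 * Sm x * Np x) /\
    derivable_pt_lim (fun s => Om (sol s)) t (2 * (q - qstar g) * Om x).

Definition inB (x : State) : Prop :=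
  Om x + Sp x ^ 2 + Sm x ^ 2 + Nm x ^ 2 = 1 /\ 0 <= Om x /\ Rabs (Np x) < Nm x.

Definition inS (x : State) : Prop := inB x /\ Sm x = 0 /\ Np x = 0.

Definition P1plus (g : R) : State :=
  mkState (- qstar g / 2) 0 0 (sqrt (qstar g * (2 - qstar g)) / 2) (1 - qstar g / 2).

Definition Fpt : State := mkState 0 0 0 0 1.
Definition Q1 : State := mkState 1 0 0 0 0.

Definition conv_minf (sol : R -> State) (p : State) : Prop :=
  is_lim (fun t => Sp (sol t)) m_infty (Sp p) /\
  is_lim (fun t => Sm (sol t)) m_infty (Sm p) /\
  is_lim (fun t => Np (sol t)) m_infty (Np p) /\
  is_lim (fun t => Nm (sol t)) m_infty (Nm p) /\
  is_lim (fun t => Om (sol t)) m_infty (Om p).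

(* x lies in \mathscr{F}_{VI_0}, where sol is the flow line through x
   (sol 0 = x); solutions are unique, so this is phi^tau(x). *)
Definition inFVI0 (sol : R -> State) (x : State) : Prop :=
  inB x /\ conv_minf sol Fpt.

(* Main.v *)
Require Import Defs.
From Stdlib Require Import Reals.
From Coquelicot Require Import Coquelicot.
From Stdlib Require Import Lra Psatz ClassicalEpsilon Classical FunctionalExtensionality.
Open Scope R_scope.

Lemma div_nonneg a b : 0 <= a -> 0 < b -> 0 <= a / b.
Proof. intros. unfold Rdiv. apply Rmult_le_pos; auto. left; apply Rinv_0_lt_compat; auto. Qed.

Lemma Dext (f g : R -> R) x a : (forall t, f t = g t) ->
  derivable_pt_lim f x a -> derivable_pt_lim g x a.
Proof. intros H D. assert (f = g) by (apply functional_extensionality; auto). now subst. Qed.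

Lemma Deq (f : R -> R) x a b : derivable_pt_lim f x a -> a = b -> derivable_pt_lim f x b.
Proof. intros; now subst. Qed.

Lemma Dconst (c x : R) : derivable_pt_lim (fun _ => c) x 0.
Proof. apply (derivable_pt_lim_const c x). Qed.

Lemma Dplus f g x a b : derivable_pt_lim f x a -> derivable_pt_lim g x b ->
  derivable_pt_lim (fun t => f t + g t) x (a + b).
Proof. intros; now apply (derivable_pt_lim_plus f g). Qed.

Lemma Dminus f g x a b : derivable_pt_lim f x a -> derivable_pt_lim g x b ->
  derivable_pt_lim (fun t => f t - g t) x (a - b).
Proof. intros; now apply (derivable_pt_lim_minus f g). Qed.

Lemma Dmult f g x a b : derivable_pt_lim f x a -> derivable_pt_lim g x b ->
  derivable_pt_lim (fun t => f t * g t) x (a * g x + f x * b).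
Proof. intros; now apply (derivable_pt_lim_mult f g). Qed.

Lemma Dopp f x a : derivable_pt_lim f x a -> derivable_pt_lim (fun t => - f t) x (- a).
Proof. intros; now apply (derivable_pt_lim_opp f). Qed.

Lemma Dpow2 f x a : derivable_pt_lim f x a ->
  derivable_pt_lim (fun t => f t ^ 2) x (2 * f x * a).
Proof.
  intros H. apply Dext with (f := fun t => f t * f t). intros; ring.
  eapply Deq. apply Dmult; eauto. ring.
Qed.

Lemma Dln f x a : derivable_pt_lim f x a -> 0 < f x ->
  derivable_pt_lim (fun t => ln (f t)) x (a / f x).
Proof.
  intros H Hp. eapply Deq.
  apply (derivable_pt_lim_comp f ln x a (/ f x) H (derivable_pt_lim_ln _ Hp)).
  unfold Rdiv; ring.
Qed.

Lemma Ddiv f g x a b : derivable_pt_lim f x a -> derivable_pt_lim g x b -> g x <> 0 ->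
  derivable_pt_lim (fun t => f t / g t) x ((a * g x - b * f x) / (g x * g x)).
Proof.
  intros. eapply Deq. apply (derivable_pt_lim_div f g x a b); auto.
  unfold Rsqr; reflexivity.
Qed.

Lemma Dexp f x a : derivable_pt_lim f x a ->
  derivable_pt_lim (fun t => exp (f t)) x (exp (f x) * a).
Proof.
  intros H. apply (derivable_pt_lim_comp f exp x a (exp (f x)) H (derivable_pt_lim_exp _)).
Qed.

Lemma Dinv f x a : derivable_pt_lim f x a -> f x <> 0 ->
  derivable_pt_lim (fun t => / f t) x (- a / (f x * f x)).
Proof.
  intros H Hn. apply Dext with (f := fun t => 1 / f t). intros; unfold Rdiv; ring.
  eapply Deq. apply Ddiv. apply Dconst. exact H. exact Hn. cbv beta. field. exact Hn.
Qed.

Lemma Did' x : derivable_pt_lim (fun t => t) x 1.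
Proof. apply derivable_pt_lim_id. Qed.

Ltac dstep :=
  first
  [ match goal with H : forall t, derivable_pt_lim ?f t _ |- derivable_pt_lim ?f _ _ => apply H end
  | eassumption
  | apply Dconst | apply Dplus | apply Dminus | apply Dopp | apply Dpow2 | apply Dmult
  | apply Dln | apply Ddiv | apply Dexp | apply Dinv ].
Ltac dtac := repeat dstep.

Lemma D_cont f x a : derivable_pt_lim f x a -> continuity_pt f x.
Proof. intros H. apply derivable_continuous_pt. exists a. exact H. Qed.

Lemma cont_eps f x : continuity_pt f x -> forall eps, 0 < eps ->
  exists d, 0 < d /\ forall r, Rabs (r - x) < d -> Rabs (f r - f x) < eps.
Proof.
  intros H eps He. destruct (H eps He) as [d [Hd H2]].
  exists d; split; auto. intros r Hr.
  destruct (Req_dec r x) as [->|Hne]. unfold Rminus; rewrite Rplus_opp_r, Rabs_R0; auto.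
  apply (H2 r). split. split. exact I. auto. exact Hr.
Qed.

Lemma open_gt f x a k : derivable_pt_lim f x a -> k < f x ->
  exists d, 0 < d /\ forall r, Rabs (r - x) < d -> k < f r.
Proof.
  intros H Hk. destruct (cont_eps f x (D_cont f x a H) (f x - k)) as [d [Hd H2]]. lra.
  exists d; split; auto. intros r Hr. specialize (H2 r Hr).
  apply Rabs_lt_between in H2. lra.
Qed.

Lemma open_lt f x a k : derivable_pt_lim f x a -> f x < k ->
  exists d, 0 < d /\ forall r, Rabs (r - x) < d -> f r < k.
Proof.
  intros H Hk. destruct (cont_eps f x (D_cont f x a H) (k - f x)) as [d [Hd H2]]. lra.
  exists d; split; auto. intros r Hr. specialize (H2 r Hr).
  apply Rabs_lt_between in H2. lra.
Qed.

Lemma deriv_pos_local f c d : derivable_pt_lim f c d -> 0 < d ->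
  exists del, 0 < del /\ forall h, 0 < h < del -> f (c - h) < f c /\ f c < f (c + h).
Proof.
  intros H Hd. destruct (H (d/2)) as [del Hdel]. lra.
  exists del. split. apply cond_pos. intros h [h0 h1].
  assert (A : forall k, k <> 0 -> Rabs k < del -> 0 < (f (c + k) - f c) / k).
  { intros k Hk Hk2. specialize (Hdel k Hk Hk2).
    apply Rabs_lt_between in Hdel. lra. }
  split.
  - assert (B := A (-h) ltac:(lra) ltac:(rewrite Rabs_Ropp, Rabs_right; lra)).
    replace (c + - h) with (c - h) in B by ring.
    assert (C: (f (c - h) - f c) < 0).
    { apply Rmult_lt_reg_r with (/ h). apply Rinv_0_lt_compat; lra.
      rewrite Rmult_0_l.
      replace ((f (c - h) - f c) * / h) with (- ((f (c - h) - f c) / - h)) by (field; lra).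
      lra. }
    lra.
  - assert (B := A h ltac:(lra) ltac:(rewrite Rabs_right; lra)).
    assert (C: 0 < (f (c + h) - f c)).
    { apply Rmult_lt_reg_r with (/ h). apply Rinv_0_lt_compat; lra.
      rewrite Rmult_0_l. exact B. }
    lra.
Qed.

Lemma deriv_neg_local f c d : derivable_pt_lim f c d -> d < 0 ->
  exists del, 0 < del /\ forall h, 0 < h < del -> f (c + h) < f c /\ f c < f (c - h).
Proof.
  intros H Hd. destruct (deriv_pos_local (fun t => - f t) c (-d)) as [del [Hdel H2]].
  apply Dopp; auto. lra.
  exists del; split; auto. intros h Hh. specialize (H2 h Hh). lra.
Qed.

Lemma sup_fail (P : R -> Prop) a b : a < b -> P b -> ~ P a ->
  (forall t, P t -> exists d, 0 < d /\ forall r, Rabs (r - t) < d -> P r) ->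
  exists c, a <= c < b /\ ~ P c /\ forall r, c < r <= b -> P r.
Proof.
  intros Hab Pb nPa Hop.
  set (E := fun t => a <= t <= b /\ ~ P t).
  assert (bE : bound E). { exists b. intros t [Ht _]. lra. }
  assert (nE : exists x, E x). { exists a. split; auto. lra. }
  destruct (completeness E bE nE) as [c [Hub Hlub]].
  assert (ac : a <= c). { apply Hub. split; auto; lra. }
  assert (cb : c <= b). { apply Hlub. intros t [Ht _]. lra. }
  assert (nPc : ~ P c).
  { intros Pc. destruct (Hop c Pc) as [d [Hd Hd2]].
    assert (c <= c - d/2); [|lra].
    apply Hlub. intros t [Ht nPt]. destruct (Rle_lt_dec t (c - d/2)); auto.
    exfalso. apply nPt. apply Hd2. assert (t <= c) by (apply Hub; split; auto).
    rewrite Rabs_left1; lra. }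
  exists c. split. split; auto. destruct cb; auto. subst; contradiction.
  split; auto. intros r [Hr1 Hr2]. apply NNPP. intros nPr.
  assert (r <= c) by (apply Hub; split; auto; lra). lra.
Qed.

Lemma MVT_ge f df a b k : (forall t, derivable_pt_lim f t (df t)) -> a < b ->
  (forall t, a < t < b -> k <= df t) -> k * (b - a) <= f b - f a.
Proof.
  intros D Hab Hk. destruct (MVT_cor2 f df a b Hab) as [c [Hc1 Hc2]]; auto.
  rewrite Hc1. apply Rmult_le_compat_r. lra. auto.
Qed.

Lemma MVT_le f df a b k : (forall t, derivable_pt_lim f t (df t)) -> a < b ->
  (forall t, a < t < b -> df t <= k) -> f b - f a <= k * (b - a).
Proof.
  intros D Hab Hk. destruct (MVT_cor2 f df a b Hab) as [c [Hc1 Hc2]]; auto.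
  rewrite Hc1. apply Rmult_le_compat_r. lra. auto.
Qed.

Lemma mono_up f df T : (forall t, derivable_pt_lim f t (df t)) ->
  (forall t, t <= T -> 0 <= df t) -> forall a b, a <= b <= T -> f a <= f b.
Proof.
  intros D H a b [H1 H2]. destruct H1. 
  - assert (0 * (b - a) <= f b - f a). apply MVT_ge with df; auto.
    intros; apply H; lra. lra.
  - subst; lra.
Qed.

Lemma mono_down f df T : (forall t, derivable_pt_lim f t (df t)) ->
  (forall t, t <= T -> df t <= 0) -> forall a b, a <= b <= T -> f b <= f a.
Proof.
  intros D H a b Hab. assert (- f a <= - f b); [|lra].
  apply (mono_up (fun t => - f t) (fun t => - df t) T); auto.
  intros; apply Dopp; auto. intros t Ht; specialize (H t Ht); lra.
Qed.

Lemma crossing f df t1 : (forall t, derivable_pt_lim f t (df t)) ->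
  (forall t, t <= t1 -> f t = 0 -> 0 < df t) -> f t1 < 0 -> forall t, t <= t1 -> f t < 0.
Proof.
  intros D Hz H1 t Ht. destruct Ht as [Ht| ->]; auto.
  apply NNPP; intros Hn.
  destruct (sup_fail (fun r => f r < 0) t t1) as [c [[Hc1 Hc2] [Hc3 Hc4]]]; auto.
  { intros r Hr. destruct (open_lt f r (df r) 0 (D r) Hr) as [d [Hd H2]]. exists d; auto. }
  assert (fc : f c = 0).
  { destruct (Rtotal_order (f c) 0) as [?|[?|?]]; auto. lra.
    destruct (open_gt f c (df c) 0 (D c) H) as [d [Hd H2]].
    set (r := Rmin (c + d/2) t1).
    assert (c < r <= t1) by (unfold r; apply Rmin_case_strong; lra).
    assert (f r < 0) by (apply Hc4; lra).
    assert (0 < f r). { apply H2. unfold r. apply Rmin_case_strong; intros;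
      rewrite Rabs_right; lra. } lra. }
  destruct (deriv_pos_local f c (df c) (D c) (Hz c ltac:(lra) fc)) as [d [Hd H2]].
  set (h := Rmin (d/2) (t1 - c)).
  assert (0 < h < d) by (unfold h; apply Rmin_case_strong; lra).
  destruct (H2 h H) as [_ H3]. assert (f (c + h) < 0). apply Hc4.
  unfold h; apply Rmin_case_strong; lra. lra.
Qed.

Lemma lim_minf_intro f (l : R) : (forall eps, 0 < eps -> exists M, forall t, t < M -> Rabs (f t - l) < eps) ->
  is_lim f m_infty l.
Proof.
  intros H. apply is_lim_spec. intros eps. destruct (H eps (cond_pos eps)) as [M HM].
  exists M; auto.
Qed.

Lemma lim_minf_elim f (l : R) : is_lim f m_infty l -> forall eps, 0 < eps ->
  exists M, forall t, t < M -> Rabs (f t - l) < eps.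
Proof.
  intros H eps He. apply is_lim_spec in H. destruct (H (mkposreal eps He)) as [M HM].
  exists M; auto.
Qed.

Lemma mono_lim_up f T B : (forall a b, a <= b <= T -> f a <= f b) -> (forall t, t <= T -> B <= f t) ->
  exists l : R, is_lim f m_infty l /\ (forall t, t <= T -> l <= f t) /\ B <= l.
Proof.
  intros Hm Hb.
  set (E := fun y => exists t, t <= T /\ y = - f t).
  assert (bE : bound E). { exists (- B). intros y [t [Ht ->]]. specialize (Hb t Ht). lra. }
  assert (nE : exists y, E y). { exists (- f T). exists T; split; auto; lra. }
  destruct (completeness E bE nE) as [m [Hub Hlub]].
  exists (- m). split; [|split].
  - apply lim_minf_intro. intros eps He.
    assert (exists t, t <= T /\ - f t > m - eps).
    { apply NNPP; intros Hn. assert (m <= m - eps); [|lra].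
      apply Hlub. intros y [t [Ht ->]]. destruct (Rle_lt_dec (- f t) (m - eps)); auto.
      exfalso; apply Hn; exists t; split; auto; lra. }
    destruct H as [t0 [Ht0 H0]]. exists t0. intros t Ht.
    assert (f t <= f t0) by (apply Hm; lra).
    assert (- f t <= m) by (apply Hub; exists t; split; auto; lra).
    rewrite Rabs_right; lra.
  - intros t Ht. assert (- f t <= m) by (apply Hub; exists t; split; auto). lra.
  - assert (m <= - B). apply Hlub. intros y [t [Ht ->]]. specialize (Hb t Ht); lra. lra.
Qed.

Lemma mono_lim_down f T B : (forall a b, a <= b <= T -> f b <= f a) -> (forall t, t <= T -> f t <= B) ->
  exists l : R, is_lim f m_infty l /\ (forall t, t <= T -> f t <= l) /\ l <= B.
Proof.
  intros Hm Hb. destruct (mono_lim_up (fun t => - f t) T (- B)) as [l [H1 [H2 H3]]].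
  intros a b Hab; specialize (Hm a b Hab); lra.
  intros t Ht; specialize (Hb t Ht); lra.
  exists (- l). split; [|split].
  apply is_lim_ext with (fun t => - - f t). intros; ring.
  apply (is_lim_opp _ _ (Finite l)) in H1. exact H1.
  intros t Ht; specialize (H2 t Ht); lra. lra.
Qed.

Lemma DL_neg f df (D M T : R) : (forall t, derivable_pt_lim f t (df t)) -> is_lim df m_infty D -> D < 0 ->
  (forall t, t <= T -> f t <= M) -> False.
Proof.
  intros Dv Hl HD Hb. destruct (lim_minf_elim df D Hl (- D / 2)) as [M1 HM1]. lra.
  set (T1 := Rmin T (M1 - 1)).
  assert (HT1 : T1 <= T /\ T1 < M1) by (unfold T1; split; apply Rmin_case_strong; lra).
  set (t := T1 - (M - f T1 + 1) * (2 / - D) - 1).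
  assert (Hpos : 0 < (M - f T1 + 1) * (2 / - D) + 1 \/ (M - f T1 + 1) * (2 / - D) + 1 <= 0) by lra.
  assert (ft : f T1 <= M) by (apply Hb; lra).
  assert (0 <= (M - f T1 + 1) * (2 / - D)).
  { apply Rmult_le_pos. lra. unfold Rdiv. apply Rmult_le_pos. lra.
    left; apply Rinv_0_lt_compat; lra. }
  assert (tlt : t < T1) by (unfold t; lra).
  assert (HH := MVT_le f df t T1 (D / 2) Dv tlt).
  assert (f T1 - f t <= D / 2 * (T1 - t)).
  { apply HH. intros r Hr. specialize (HM1 r ltac:(lra)). apply Rabs_lt_between in HM1. lra. }
  assert (f t <= M) by (apply Hb; lra).
  assert (D / 2 * (T1 - t) = - (M - f T1 + 1) + (D/2)).
  { unfold t. field. lra. }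
  lra.
Qed.

Lemma DL_pos f df (D M T : R) : (forall t, derivable_pt_lim f t (df t)) -> is_lim df m_infty D -> 0 < D ->
  (forall t, t <= T -> M <= f t) -> False.
Proof.
  intros Dv Hl HD Hb. apply (DL_neg (fun t => - f t) (fun t => - df t) (- D) (- M) T).
  intros; apply Dopp; auto.
  apply (is_lim_opp _ _ (Finite D)) in Hl. exact Hl. lra.
  intros t Ht; specialize (Hb t Ht); lra.
Qed.

Lemma DL_zero f df (l D : R) : (forall t, derivable_pt_lim f t (df t)) -> is_lim f m_infty l ->
  is_lim df m_infty D -> D = 0.
Proof.
  intros Dv Hf Hd. destruct (lim_minf_elim f l Hf 1 Rlt_0_1) as [M HM].
  destruct (Rtotal_order D 0) as [H|[H|H]]; auto; exfalso.
  - apply (DL_neg f df D (l + 1) (M - 1)); auto. intros t Ht.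
    specialize (HM t ltac:(lra)). apply Rabs_lt_between in HM; lra.
  - apply (DL_pos f df D (l - 1) (M - 1)); auto. intros t Ht.
    specialize (HM t ltac:(lra)). apply Rabs_lt_between in HM; lra.
Qed.

Lemma is_lim_mult' (f g : R -> R) x (a b : R) : is_lim f x a -> is_lim g x b ->
  is_lim (fun t => f t * g t) x (a * b).
Proof.
  intros Hf Hg. apply (is_lim_mult f g x a b Hf Hg). simpl; exact I.
Qed.

Lemma is_lim_const' (c : R) x : is_lim (fun _ => c) x c.
Proof. apply is_lim_const. Qed.

Lemma is_lim_opp' (f : R -> R) x (a : R) : is_lim f x a -> is_lim (fun t => - f t) x (- a).
Proof. intros H. apply (is_lim_opp f x a H). Qed.

Lemma is_lim_pow2' (f : R -> R) x (a : R) : is_lim f x a -> is_lim (fun t => f t ^ 2) x (a ^ 2).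
Proof.
  intros H. apply is_lim_ext with (fun t => f t * f t). intros; ring.
  replace (a ^ 2) with (a * a) by ring. apply is_lim_mult'; auto.
Qed.

Ltac lstep :=
  first [ eassumption | apply is_lim_const' | apply is_lim_plus' | apply is_lim_minus'
        | apply is_lim_mult' | apply is_lim_opp' | apply is_lim_pow2' ].
Ltac ltac_ := repeat lstep.

Lemma is_lim_eq f x (a b : R) : is_lim f x a -> a = b -> is_lim f x b.
Proof. intros; now subst. Qed.

Lemma lim_to_seq f (l : R) : is_lim f m_infty l -> is_lim_seq (fun n => f (- INR n)) l.
Proof.
  intros H. apply is_lim_seq_spec. intros eps.
  destruct (lim_minf_elim f l H eps (cond_pos eps)) as [M HM].
  destruct (archimed (- M)) as [H1 _].
  exists (S (Z.to_nat (up (- M)))). intros n Hn. apply HM.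
  assert (IZR (up (- M)) <= INR (Z.to_nat (up (- M)))).
  { rewrite INR_IZR_INZ. apply IZR_le. lia. }
  assert (INR (S (Z.to_nat (up (- M)))) <= INR n) by (apply le_INR; lia).
  rewrite S_INR in H2. lra.
Qed.

Lemma gronwall_zero (g dg k : R -> R) t0 :
  (forall t, derivable_pt_lim g t (dg t)) -> (forall t, continuity_pt k t) ->
  (forall t, Rabs (dg t) <= k t * Rabs (g t)) -> g t0 = 0 -> forall t, g t = 0.
Proof.
  intros Dg Dk Hb H0 t1.
  assert (Kb : forall a b, a <= b -> exists K, 0 <= K /\ forall t, a <= t <= b -> k t <= K).
  { intros a b Hab. destruct (continuity_ab_maj k a b Hab) as [M [HM _]].
    intros c _. apply Dk.
    exists (Rmax 0 (k M)). split. apply Rmax_l. intros t Ht. eapply Rle_trans. apply HM; auto. apply Rmax_r. }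
  assert (GD : forall t, g t * dg t <= k t * (g t * g t) /\ - (k t * (g t * g t)) <= g t * dg t).
  { intros t. specialize (Hb t).
    assert (Rabs (g t * dg t) <= k t * (g t * g t)).
    { rewrite Rabs_mult. replace (g t * g t) with (Rabs (g t) * Rabs (g t)).
      assert (0 <= Rabs (g t)) by apply Rabs_pos. nra.
      rewrite <- Rabs_mult. apply Rabs_right. apply Rle_ge, Rle_0_sqr. }
    apply Rabs_le_between in H. lra. }
  assert (gsq : forall t, 0 <= g t * g t) by (intros; apply Rle_0_sqr).
  destruct (Rtotal_order t0 t1) as [Hlt|[Heq|Hgt]].
  - destruct (Kb t0 t1 ltac:(lra)) as [K [HK HKb]].
    set (h := fun t => g t * g t * exp (- (2 * K) * t)).
    set (dh := fun t => (2 * g t * dg t - 2 * K * (g t * g t)) * exp (- (2 * K) * t)).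
    assert (Dh : forall t, derivable_pt_lim h t (dh t)).
    { intros t. unfold h, dh. eapply Deq. apply Dmult. apply Dmult; apply Dg.
      apply Dexp. apply Dmult. apply Dconst. apply Did'. cbv beta. ring. }
    assert (M := MVT_le h dh t0 t1 0 Dh Hlt).
    assert (h t1 - h t0 <= 0 * (t1 - t0)).
    { apply M. intros t Ht. unfold dh. destruct (GD t) as [G1 _].
      assert (k t <= K) by (apply HKb; lra).
      assert (2 * g t * dg t - 2 * K * (g t * g t) <= 0) by (specialize (gsq t); nra).
      assert (0 < exp (- (2 * K) * t)) by apply exp_pos. nra. }
    unfold h in H. rewrite H0 in H.
    assert (0 < exp (- (2 * K) * t1)) by apply exp_pos.
    assert (g t1 * g t1 = 0) by (specialize (gsq t1); nra). nra.
  - subst; auto.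
  - destruct (Kb t1 t0 ltac:(lra)) as [K [HK HKb]].
    set (h := fun t => g t * g t * exp ((2 * K) * t)).
    set (dh := fun t => (2 * g t * dg t + 2 * K * (g t * g t)) * exp ((2 * K) * t)).
    assert (Dh : forall t, derivable_pt_lim h t (dh t)).
    { intros t. unfold h, dh. eapply Deq. apply Dmult. apply Dmult; apply Dg.
      apply Dexp. apply Dmult. apply Dconst. apply Did'. cbv beta. ring. }
    assert (M := MVT_ge h dh t1 t0 0 Dh Hgt).
    assert (0 * (t0 - t1) <= h t0 - h t1).
    { apply M. intros t Ht. unfold dh. destruct (GD t) as [_ G2].
      assert (k t <= K) by (apply HKb; lra).
      assert (0 <= 2 * g t * dg t + 2 * K * (g t * g t)) by (specialize (gsq t); nra).
      assert (0 < exp ((2 * K) * t)) by apply exp_pos. nra. }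
    unfold h in H. rewrite H0 in H.
    assert (0 < exp ((2 * K) * t1)) by apply exp_pos.
    assert (g t1 * g t1 = 0) by (specialize (gsq t1); nra). nra.
Qed.

Lemma zero_between (f df : R -> R) a b : (forall t, derivable_pt_lim f t (df t)) ->
  f a <= 0 -> 0 < f b -> exists z, f z = 0.
Proof.
  intros D Ha Hb. destruct Ha as [Ha|Ha]; [|exists a; auto].
  assert (Cf : continuity f) by (intros t; apply (D_cont f t (df t) (D t))).
  destruct (Rtotal_order a b) as [H|[H|H]].
  - destruct (IVT f a b Cf H Ha Hb) as [z [_ Hz]]. exists z; auto.
  - subst; lra.
  - assert (Cg : continuity (fun t => - f t)).
    { intros t. apply (D_cont _ t (- df t)). apply Dopp; auto. }
    destruct (IVT (fun t => - f t) b a Cg H ltac:(lra) ltac:(lra)) as [z [_ Hz]].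
    exists z; lra.
Qed.

Lemma pos_persist (f df k : R -> R) t0 :
  (forall t, derivable_pt_lim f t (df t)) -> (forall t, continuity_pt k t) ->
  (forall t, Rabs (df t) <= k t * Rabs (f t)) -> 0 < f t0 -> forall t, 0 < f t.
Proof.
  intros D Dk Hb H0 t. apply Rnot_le_lt. intros Hle.
  destruct (zero_between f df t t0 D Hle H0) as [z Hz].
  pose proof (gronwall_zero f df k z D Dk Hb Hz t0). lra.
Qed.

Definition Gf (Q s r : R) := 2 * r * (1 + s) + (2 - Q) * (1 - r) * s.
Definition Af (Q s : R) := ln (1 - s ^ 2) - 2 * ln (2 + Q * s).
Definition Bf (Q r : R) := 2 * ln (1 - r) + Q * ln r.
Definition Lf (Q s r : R) := (2 + Q) * Af Q s + Bf Q r.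
Definition rs (Q : R) := Q / (2 + Q).
Definition Lstar (Q : R) := Lf Q (- Q / 2) (rs Q).

Lemma ln_le_m1 y : 0 < y -> ln y <= y - 1.
Proof. intros H. pose proof (exp_ineq1_le (ln y)). rewrite exp_ln in H0; lra. Qed.

Lemma ln_lt_m1 y : 0 < y -> y <> 1 -> ln y < y - 1.
Proof. intros H H1. pose proof (exp_ineq1 (ln y) (ln_neq_0 y H1 H)). rewrite exp_ln in H0; lra. Qed.

Lemma ln_le_mono x y : 0 < x -> x <= y -> ln x <= ln y.
Proof. intros H [H1| ->]. left; apply ln_increasing; auto. lra. Qed.

Lemma A_max Q s : 0 < Q < 2 -> -1 < s < 1 -> Af Q s <= Af Q (- Q / 2) /\ (Af Q s = Af Q (-Q/2) -> s = - Q / 2).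
Proof.
  intros HQ Hs.
  assert (E : forall x, -1 < x < 1 -> Af Q x = ln ((1 - x ^ 2) / ((2 + Q * x) * (2 + Q * x)))).
  { intros x Hx. unfold Af, Rdiv.
    assert (0 < 1 - x^2) by nra. assert (0 < 2 + Q * x) by nra.
    rewrite ln_mult, ln_Rinv, ln_mult; auto; try nra. apply Rinv_0_lt_compat; nra. }
  rewrite !E; try lra.
  assert (0 < 1 - s^2) by nra. assert (0 < 2 + Q * s) by nra.
  assert (K : (1 - s ^ 2) / ((2 + Q * s) * (2 + Q * s)) <= (1 - (-Q/2) ^ 2) / ((2 + Q * (-Q/2)) * (2 + Q * (-Q/2)))
          /\ (s <> -Q/2 -> (1 - s ^ 2) / ((2 + Q * s) * (2 + Q * s)) < (1 - (-Q/2) ^ 2) / ((2 + Q * (-Q/2)) * (2 + Q * (-Q/2))))).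
  { assert (R1 : (1 - (-Q/2) ^ 2) / ((2 + Q * (-Q/2)) * (2 + Q * (-Q/2))) = / (4 - Q^2)).
    { field; repeat split; nra. }
    rewrite R1.
    assert (Dd : / (4 - Q^2) - (1 - s ^ 2) / ((2 + Q * s) * (2 + Q * s)) = (2*s + Q)^2 / ((4 - Q^2) * ((2 + Q * s) * (2 + Q * s)))).
    { field; repeat split; nra. }
    assert (0 < (4 - Q^2) * ((2 + Q * s) * (2 + Q * s))) by (apply Rmult_lt_0_compat; nra).
    split.
    - assert (0 <= (2*s + Q)^2 / ((4 - Q^2) * ((2 + Q * s) * (2 + Q * s)))).
      { apply div_nonneg; [apply pow2_ge_0 | assumption]. } lra.
    - intros Hne. assert (0 < (2*s + Q)^2 / ((4 - Q^2) * ((2 + Q * s) * (2 + Q * s)))).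
      { apply Rdiv_lt_0_compat; auto. assert (2 * s + Q <> 0) by lra. nra. } lra. }
  destruct K as [K1 K2].
  assert (P0 : 0 < (1 - s ^ 2) / ((2 + Q * s) * (2 + Q * s))).
  { apply Rdiv_lt_0_compat; nra. }
  split.
  - apply ln_le_mono; auto.
  - intros Heq. apply NNPP; intros Hne. specialize (K2 Hne).
    pose proof (ln_increasing _ _ P0 K2). lra.
Qed.

Lemma B_max Q r : 0 < Q < 2 -> 0 < r < 1 -> Bf Q r <= Bf Q (rs Q) /\ (Bf Q r = Bf Q (rs Q) -> r = rs Q).
Proof.
  intros HQ Hr. unfold Bf.
  assert (Hrs : (2 + Q) * rs Q = Q) by (unfold rs; field; lra).
  assert (H1 : 0 < rs Q < 1).
  { unfold rs. split. apply Rdiv_lt_0_compat; lra.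
    apply Rmult_lt_reg_r with (2+Q). lra. unfold Rdiv. rewrite Rmult_assoc, Rinv_l; lra. }
  set (p := rs Q) in *.
  assert (Pa : 0 < (1 - r) / (1 - p)) by (apply Rdiv_lt_0_compat; lra).
  assert (Pb : 0 < r / p) by (apply Rdiv_lt_0_compat; lra).
  assert (Ea : ln (1 - r) = ln ((1 - r) / (1 - p)) + ln (1 - p)).
  { rewrite <- ln_mult; try lra. f_equal. field. lra. }
  assert (Eb : ln r = ln (r / p) + ln p).
  { rewrite <- ln_mult; try lra. f_equal. field. lra. }
  assert (Sum : 2 * ((1 - r) / (1 - p) - 1) + Q * (r / p - 1) = 0).
  { apply Rmult_eq_reg_r with (p * (1 - p)). 2: nra.
    field_simplify; try lra. nra. }
  pose proof (ln_le_m1 _ Pa). pose proof (ln_le_m1 _ Pb).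
  rewrite Ea, Eb. split.
  - nra.
  - intros Heq. apply NNPP; intros Hne.
    assert (Hne1 : (1 - r) / (1 - p) <> 1).
    { intro H'. apply Hne. apply Rmult_eq_compat_r with (r := 1 - p) in H'.
      unfold Rdiv in H'. rewrite Rmult_assoc, Rinv_l, Rmult_1_r, Rmult_1_l in H'; lra. }
    pose proof (ln_lt_m1 _ Pa Hne1). nra.
Qed.

Lemma L_max Q s r : 0 < Q < 2 -> -1 < s < 1 -> 0 < r < 1 ->
  Lf Q s r <= Lstar Q /\ (Lf Q s r = Lstar Q -> s = - Q / 2 /\ r = rs Q).
Proof.
  intros HQ Hs Hr. destruct (A_max Q s HQ Hs) as [A1 A2]. destruct (B_max Q r HQ Hr) as [B1 B2].
  unfold Lstar, Lf. split. nra.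
  intros Heq. assert (Af Q s = Af Q (-Q/2)) by nra. assert (Bf Q r = Bf Q (rs Q)) by nra. auto.
Qed.

Definition sys2 (Q : R) (s r : R -> R) : Prop :=
  0 < Q < 2 /\
  (forall t, derivable_pt_lim s t (- ((1 - s t ^ 2) * Gf Q (s t) (r t)))) /\
  (forall t, derivable_pt_lim r t (2 * r t * (1 - r t) * (2 * s t + Q))) /\
  (forall t, -1 < s t < 1 /\ 0 < r t <= 1).

Lemma Did x : derivable_pt_lim (fun t => t) x 1.
Proof. apply derivable_pt_lim_id. Qed.

Ltac dstep2 := first [ dstep | apply Did ].
Ltac dtac2 := repeat dstep2.

Lemma L_deriv Q s r t : sys2 Q s r -> r t < 1 ->
  derivable_pt_lim (fun t => Lf Q (s t) (r t)) t (4 * (2 * s t + Q) ^ 2 / (2 + Q * s t)).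
Proof.
  intros [HQ [Ds [Dr Hb]]] Hr1. destruct (Hb t) as [Hs Hr].
  unfold Lf, Af, Bf.
  eapply Deq. dtac2.
  all: try (simpl; nra).
  unfold Gf. field. repeat split; nra.
Qed.

Lemma L_mono Q s r : sys2 Q s r -> (forall t, r t < 1) ->
  forall a b, a <= b -> Lf Q (s a) (r a) <= Lf Q (s b) (r b).
Proof.
  intros H Hr a b Hab.
  apply (mono_up (fun t => Lf Q (s t) (r t)) (fun t => 4 * (2 * s t + Q) ^ 2 / (2 + Q * s t)) b).
  intros t; apply L_deriv; auto.
  intros t _. destruct H as [HQ [_ [_ Hb]]]. destruct (Hb t) as [Hs _].
  apply div_nonneg. apply Rmult_le_pos; [lra | apply pow2_ge_0]. nra.
  split; lra.
Qed.

Lemma Af_cont Q x : 0 < Q < 2 -> -1 < x < 1 -> continuity_pt (Af Q) x.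
Proof.
  intros HQ Hx.
  assert (Hd : exists a, derivable_pt_lim (fun y => ln (1 - y ^ 2) - 2 * ln (2 + Q * y)) x a).
  { eexists. dtac2; simpl; nra. }
  destruct Hd as [a Hd]. exact (D_cont _ x a Hd).
Qed.

Lemma Bf_cont Q x : 0 < x < 1 -> continuity_pt (Bf Q) x.
Proof.
  intros Hx.
  assert (Hd : exists a, derivable_pt_lim (fun y => 2 * ln (1 - y) + Q * ln y) x a).
  { eexists. dtac2; lra. }
  destruct Hd as [a Hd]. exact (D_cont _ x a Hd).
Qed.

Lemma rs_bounds Q : 0 < Q < 2 -> 0 < rs Q < 1.
Proof.
  intros HQ. unfold rs. split. apply Rdiv_lt_0_compat; lra.
  apply Rmult_lt_reg_r with (2+Q). lra. unfold Rdiv. rewrite Rmult_assoc, Rinv_l; lra.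
Qed.

Definition P1at Q (s r : R -> R) := s 0 = - Q / 2 /\ r 0 = rs Q.

Lemma P1_seq Q s r (tn : nat -> R) : sys2 Q s r -> (forall t, r t < 1) ->
  (forall n, tn n <= 0) ->
  is_lim_seq (fun n => s (tn n)) (- Q / 2) -> is_lim_seq (fun n => r (tn n)) (rs Q) ->
  P1at Q s r.
Proof.
  intros H Hr1 Htn Hs Hr. pose proof H as [HQ [_ [_ Hb]]].
  assert (LA := is_lim_seq_continuous (Af Q) _ _ (Af_cont Q (-Q/2) HQ ltac:(lra)) Hs).
  assert (LB := is_lim_seq_continuous (Bf Q) _ _ (Bf_cont Q (rs Q) (rs_bounds Q HQ)) Hr).
  assert (LL : is_lim_seq (fun n => Lf Q (s (tn n)) (r (tn n))) (Lstar Q)).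
  { unfold Lf, Lstar, Lf. apply is_lim_seq_plus'; auto.
    apply is_lim_seq_mult'; auto. apply is_lim_seq_const. }
  assert (Le := is_lim_seq_le _ _ _ _ (fun n => L_mono Q s r H Hr1 (tn n) 0 (Htn n)) LL (is_lim_seq_const _)).
  simpl in Le. destruct (Hb 0) as [Hs0 Hr0].
  destruct (L_max Q (s 0) (r 0) HQ Hs0 ltac:(specialize (Hr1 0); lra)) as [M1 M2].
  apply M2. lra.
Qed.

Lemma P1_lim Q s r : sys2 Q s r -> (forall t, r t < 1) ->
  is_lim s m_infty (- Q / 2) -> is_lim r m_infty (rs Q) -> P1at Q s r.
Proof.
  intros H Hr1 Hs Hr. apply (P1_seq Q s r (fun n => - INR n)); auto.
  intros n; pose proof (pos_INR n); lra.
  apply lim_to_seq; auto. apply lim_to_seq; auto.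
Qed.

Lemma deriv_lims Q s r (a b : R) : sys2 Q s r -> is_lim s m_infty a -> is_lim r m_infty b ->
  (1 - a ^ 2) * Gf Q a b = 0 /\ b * (1 - b) * (2 * a + Q) = 0.
Proof.
  intros [HQ [Ds [Dr Hb]]] La Lb. split.
  - assert (E := DL_zero s _ a (- ((1 - a ^ 2) * Gf Q a b)) Ds La).
    assert (- ((1 - a ^ 2) * Gf Q a b) = 0); [|lra]. apply E.
    unfold Gf. ltac_.
  - assert (E := DL_zero r _ b (2 * b * (1 - b) * (2 * a + Q)) Dr Lb).
    assert (2 * b * (1 - b) * (2 * a + Q) = 0); [|lra]. apply E. ltac_.
Qed.

Lemma partA Q s r : sys2 Q s r -> (exists t0, t0 <= 0 /\ 0 <= s t0) -> is_lim s m_infty 1.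
Proof.
  intros H [t0 [Ht0 Hs0]]. pose proof H as [HQ [Ds [Dr Hb]]].
  assert (Ht1 : exists t1, t1 <= t0 /\ 0 < s t1).
  { destruct Hs0 as [Hs0|Hs0]. exists t0; split; lra.
    destruct (deriv_neg_local s t0 _ (Ds t0)) as [del [Hdel Hd]].
    { rewrite <- Hs0. unfold Gf. destruct (Hb t0). nra. }
    exists (t0 - del/2). split. lra. destruct (Hd (del/2)) as [_ H2]; lra. }
  destruct Ht1 as [t1 [Ht1 Hs1]].
  assert (Pos : forall t, t <= t1 -> 0 < s t).
  { intros t Ht. assert (- s t < 0); [|lra].
    apply (crossing (fun t => - s t) (fun t => (1 - s t ^ 2) * Gf Q (s t) (r t)) t1); auto.
    - intros x. eapply Deq. apply Dopp, Ds. ring.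
    - intros x _ Hx. assert (s x = 0) by lra. rewrite H0. unfold Gf. destruct (Hb x). nra.
    - lra. }
  assert (Gpos : forall t, t <= t1 -> 0 < Gf Q (s t) (r t)).
  { intros t Ht. specialize (Pos t Ht). destruct (Hb t). unfold Gf.
    assert (0 < r t * (1 + s t)) by (apply Rmult_lt_0_compat; lra).
    assert (0 <= (2 - Q) * (1 - r t) * s t) by (repeat apply Rmult_le_pos; lra). lra. }
  destruct (mono_lim_down s t1 1) as [l [Hl [Hl1 Hl2]]].
  { apply (mono_down s _ t1 Ds). intros t Ht. specialize (Gpos t Ht). destruct (Hb t).
    assert (0 <= (1 - s t ^ 2) * Gf Q (s t) (r t)) by (apply Rmult_le_pos; nra). lra. }
  { intros t _. destruct (Hb t); lra. }
  destruct (mono_lim_up r t1 0) as [lr [Hlr [Hlr1 Hlr2]]].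
  { apply (mono_up r _ t1 Dr). intros t Ht. specialize (Pos t Ht). destruct (Hb t).
    apply Rmult_le_pos; [|lra]. apply Rmult_le_pos; [|lra]. lra. }
  { intros t _. destruct (Hb t); lra. }
  destruct (deriv_lims Q s r l lr H Hl Hlr) as [E1 _].
  assert (l >= s t1) by (apply Rle_ge, Hl1; lra).
  assert (lr <= 1) by (specialize (Hlr1 t1 ltac:(lra)); destruct (Hb t1); lra).
  assert (Gl : 0 < Gf Q l lr).
  { assert (0 <= lr * (2 + Q * l)) by (apply Rmult_le_pos; nra).
    assert (0 < (2 - Q) * l) by (apply Rmult_lt_0_compat; lra).
    replace (Gf Q l lr) with ((2 - Q) * l + lr * (2 + Q * l)) by (unfold Gf; ring). lra. }
  assert (l = 1).
  { assert (1 - l ^ 2 = 0). { apply Rmult_eq_reg_r with (Gf Q l lr). lra. lra. }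
    nra. }
  subst l. exact Hl.
Qed.

Lemma vacuum Q s r : sys2 Q s r -> (forall t, r t = 1) -> (forall t, t <= 0 -> s t < 0) -> False.
Proof.
  intros H Hr Hneg. pose proof H as [HQ [Ds [Dr Hb]]].
  destruct (mono_lim_down s 0 0) as [l [Hl [Hl1 Hl2]]].
  { apply (mono_down s _ 0 Ds). intros t Ht. rewrite Hr. unfold Gf. destruct (Hb t).
    assert (0 <= (1 - s t ^ 2) * (2 * 1 * (1 + s t) + (2 - Q) * (1 - 1) * s t)) by (apply Rmult_le_pos; nra). lra. }
  { intros t Ht. specialize (Hneg t Ht); lra. }
  assert (Lr : is_lim r m_infty 1).
  { apply is_lim_ext with (fun _ => 1). intros; auto. apply is_lim_const'. }
  destruct (deriv_lims Q s r l 1 H Hl Lr) as [E1 _].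
  assert (l >= s 0) by (apply Rle_ge, Hl1; lra). destruct (Hb 0).
  unfold Gf in E1. replace ((2 - Q) * (1 - 1) * l) with 0 in E1 by ring.
  apply Rmult_integral in E1. destruct E1 as [E1|E1]; nra.
Qed.

Definition Ff Q s r := (1 - s ^ 2) * Gf Q s r.
Definition Fdf Q s r := 2 * s * Ff Q s r * Gf Q s r +
  (1 - s ^ 2) * ((2 * r + (2 - Q) * (1 - r)) * (- Ff Q s r) + (2 + Q * s) * (2 * r * (1 - r) * (2 * s + Q))).

Lemma abs_prod_le x y X Y : Rabs x <= X -> Rabs y <= Y -> Rabs (x * y) <= X * Y.
Proof.
  intros. rewrite Rabs_mult. apply Rmult_le_compat; auto; apply Rabs_pos.
Qed.

Lemma bnd_G Q s r : 0 < Q < 2 -> -1 < s < 1 -> 0 < r < 1 -> Rabs (Gf Q s r) <= 6.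
Proof.
  intros. unfold Gf.
  assert (0 <= r * (1 + s) <= 2) by (split; nra).
  assert (0 <= (2 - Q) * (1 - r) <= 2) by (split; nra).
  assert (Rabs ((2 - Q) * (1 - r) * s) <= 2 * 1).
  { apply abs_prod_le. rewrite Rabs_right; lra. apply Rabs_le; lra. }
  apply Rabs_le. apply Rabs_le_between in H4. nra.
Qed.

Lemma bnd_F Q s r : 0 < Q < 2 -> -1 < s < 1 -> 0 < r < 1 -> Rabs (Ff Q s r) <= 6.
Proof.
  intros. unfold Ff. replace 6 with (1 * 6) by ring. apply abs_prod_le.
  apply Rabs_le; nra. apply bnd_G; auto.
Qed.

Lemma bnd_u Q s : 0 < Q < 2 -> -1 < s < 1 -> Rabs (2 * s + Q) <= 4.
Proof. intros. apply Rabs_le; lra. Qed.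

Lemma bnd_Fd Q s r : 0 < Q < 2 -> -1 < s < 1 -> 0 < r < 1 -> Rabs (Fdf Q s r) <= 104.
Proof.
  intros HQ Hs Hr. unfold Fdf.
  assert (B1 : Rabs (2 * s * Ff Q s r * Gf Q s r) <= 2 * 6 * 6).
  { apply abs_prod_le; [|apply bnd_G; auto]. apply abs_prod_le; [|apply bnd_F; auto].
    apply Rabs_le; lra. }
  assert (B2 : Rabs ((1 - s ^ 2) * ((2 * r + (2 - Q) * (1 - r)) * (- Ff Q s r))) <= 1 * (4 * 6)).
  { apply abs_prod_le. apply Rabs_le; nra. apply abs_prod_le. apply Rabs_le; nra.
    rewrite Rabs_Ropp; apply bnd_F; auto. }
  assert (B3 : Rabs ((1 - s ^ 2) * ((2 + Q * s) * (2 * r * (1 - r) * (2 * s + Q)))) <= 1 * (4 * (2 * (1/4) * 4))).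
  { apply abs_prod_le. apply Rabs_le; nra. apply abs_prod_le. apply Rabs_le; nra.
    apply abs_prod_le. apply Rabs_le; split; [nra | pose proof (pow2_ge_0 (2*r-1)); nra].
    apply bnd_u; auto. }
  rewrite Rmult_plus_distr_l.
  eapply Rle_trans. apply Rabs_triang. eapply Rle_trans. apply Rplus_le_compat_l. apply Rabs_triang.
  lra.
Qed.

Lemma lasalle Q s r m : sys2 Q s r -> (forall t, r t < 1) ->
  (forall t, t <= 0 -> m <= Lf Q (s t) (r t)) ->
  forall eps, 0 < eps -> exists t, t <= 0 /\ Rabs (2 * s t + Q) < eps /\ Rabs (Ff Q (s t) (r t)) < eps.
Proof.
  intros H Hr1 Hm eps Heps. pose proof H as [HQ [Ds [Dr Hb]]].
  apply NNPP; intro Hn.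
  assert (Hc : forall t, t <= 0 -> eps <= Rabs (2 * s t + Q) \/ (Rabs (2 * s t + Q) < eps /\ eps <= Rabs (Ff Q (s t) (r t)))).
  { intros t Ht. destruct (Rle_lt_dec eps (Rabs (2 * s t + Q))); [left; auto|right; split; auto].
    destruct (Rle_lt_dec eps (Rabs (Ff Q (s t) (r t)))); auto. exfalso; apply Hn; exists t; auto. }
  set (C := 104).
  set (e1 := Rmin eps (eps * eps / C)).
  assert (He1 : 0 < e1 /\ e1 <= eps /\ e1 * C <= eps * eps).
  { assert (E : eps * eps / C * C = eps * eps) by (unfold C; field).
    assert (0 < eps * eps / C) by (unfold C; apply Rdiv_lt_0_compat; nra).
    unfold e1. apply Rmin_case_strong; intros Hm'.
    - split; [lra|split; [lra|]]. rewrite <- E. apply Rmult_le_compat_r; [unfold C; lra | exact Hm'].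
    - split; [lra|split; [lra|]]. lra. }
  set (d := e1 / (2 * C)).
  assert (Hd : 0 < d /\ d * C = e1 / 2) by (unfold d, C; split; [apply Rdiv_lt_0_compat; lra | field]).
  set (eta := Rmin (e1 * e1 / 2) (d * eps * eps)).
  assert (Heta : 0 < eta /\ eta <= e1 * e1 / 2 /\ eta <= d * eps * eps).
  { unfold eta. apply Rmin_case_strong; intros; repeat split; try lra.
    nra. apply Rmult_lt_0_compat; [nra|lra]. }
  set (V := fun t => Lf Q (s t) (r t) - d * (2 * s t + Q) * Ff Q (s t) (r t)).
  set (Vd := fun t => 4 * (2 * s t + Q) ^ 2 / (2 + Q * s t) + 2 * d * (Ff Q (s t) (r t)) ^ 2
                      - d * (2 * s t + Q) * Fdf Q (s t) (r t)).
  assert (DV : forall t, derivable_pt_lim V t (Vd t)).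
  { intros t. unfold V, Vd. destruct (Hb t) as [Hs Hr].
    eapply Deq. apply Dminus. apply L_deriv; auto.
    unfold Ff, Gf. dtac2.
    unfold Fdf, Ff, Gf. field. nra. }
  assert (Vb : forall t, m - d * 24 <= V t \/ 0 < t).
  { intros t. destruct (Rle_lt_dec t 0); [left|right; auto].
    unfold V. destruct (Hb t) as [Hs Hr]. specialize (Hm t r0).
    assert (Rabs ((2 * s t + Q) * Ff Q (s t) (r t)) <= 4 * 6).
    { apply abs_prod_le. apply bnd_u; auto. apply bnd_F; auto. specialize (Hr1 t); lra. }
    apply Rabs_le_between in H0. nra. }
  assert (VdB : forall t, t <= 0 -> eta <= Vd t).
  { intros t Ht. destruct (Hb t) as [Hs Hr]. specialize (Hr1 t).
    set (u := 2 * s t + Q) in *. set (F := Ff Q (s t) (r t)) in *.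
    assert (HD := bnd_Fd Q (s t) (r t) HQ Hs ltac:(lra)).
    assert (P1 : u ^ 2 <= 4 * u ^ 2 / (2 + Q * s t)).
    { assert (4 * u ^ 2 / (2 + Q * s t) - u ^ 2 = u ^ 2 * (2 - Q * s t) / (2 + Q * s t)) by (field; nra).
      assert (0 <= u ^ 2 * (2 - Q * s t) / (2 + Q * s t)).
      { apply div_nonneg. apply Rmult_le_pos. apply pow2_ge_0. nra. nra. } lra. }
    assert (P2 : u * Fdf Q (s t) (r t) <= Rabs u * 104).
    { eapply Rle_trans. apply Rle_abs. rewrite Rabs_mult. apply Rmult_le_compat_l. apply Rabs_pos. auto. }
    assert (P3 : u ^ 2 = Rabs u * Rabs u) by (rewrite <- Rabs_mult; simpl; rewrite Rmult_1_r; rewrite Rabs_right; [ring| apply Rle_ge, Rle_0_sqr]).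
    assert (P4 : F ^ 2 = Rabs F * Rabs F) by (rewrite <- Rabs_mult; simpl; rewrite Rmult_1_r; rewrite Rabs_right; [ring| apply Rle_ge, Rle_0_sqr]).
    assert (Vd t >= Rabs u * Rabs u + 2 * d * (Rabs F * Rabs F) - d * C * Rabs u).
    { unfold Vd. fold u. fold F. rewrite <- P3, <- P4. unfold C.
      assert (d * (u * Fdf Q (s t) (r t)) <= d * (Rabs u * 104)) by (apply Rmult_le_compat_l; lra).
      nra. }
    destruct (Rle_lt_dec e1 (Rabs u)) as [Hu|Hu].
    - assert (Rabs u * Rabs u - d * C * Rabs u >= e1 * e1 / 2).
      { destruct Hd as [_ Hd2]. rewrite Hd2. nra. }
      assert (0 <= 2 * d * (Rabs F * Rabs F)) by (apply Rmult_le_pos; [lra| apply Rle_0_sqr]).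
      lra.
    - assert (Hf : eps <= Rabs F).
      { destruct (Hc t Ht) as [Hu'|[_ Hf]]. fold u in Hu'. lra. exact Hf. }
      assert (2 * d * (Rabs F * Rabs F) >= 2 * d * (eps * eps)).
      { apply Rle_ge, Rmult_le_compat_l. lra. apply Rmult_le_compat; lra. }
      assert (d * C * Rabs u <= d * eps * eps).
      { destruct He1 as [_ [_ He3]].
        assert (Rabs u * C <= eps * eps).
        { assert (Rabs u * C <= e1 * C) by (apply Rmult_le_compat_r; unfold C; lra). lra. }
        assert (d * C * Rabs u = d * (Rabs u * C)) by ring.
        assert (d * (Rabs u * C) <= d * (eps * eps)) by (apply Rmult_le_compat_l; lra). nra. }
      assert (0 <= Rabs u * Rabs u) by apply Rle_0_sqr.
      lra. }
  destruct (Vb 0) as [V0|]; [|lra].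
  set (K := V 0 - (m - d * 24) + 1).
  assert (HK : 1 <= K) by (unfold K; lra).
  set (t := - K / eta).
  assert (Ht : t < 0) by (unfold t; apply Ropp_lt_cancel; rewrite Ropp_0; unfold Rdiv; rewrite Ropp_mult_distr_l, Ropp_involutive; apply Rmult_lt_0_compat; [lra | apply Rinv_0_lt_compat; lra]).
  assert (M := MVT_ge V Vd t 0 eta DV Ht (fun x Hx => VdB x ltac:(lra))).
  destruct (Vb t) as [Vt|]; [|lra].
  assert (eta * (0 - t) = K) by (unfold t; field; lra).
  unfold K in *. lra.
Qed.

Lemma seq_small (x : nat -> R) (a : R) : (forall n, Rabs (x n - a) < / (INR n + 1)) -> is_lim_seq x a.
Proof.
  intros H. apply is_lim_seq_spec. intros eps.
  destruct (archimed (/ eps)) as [H1 _].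
  exists (Z.to_nat (up (/ eps))). intros n Hn.
  eapply Rlt_le_trans. apply H.
  assert (IZR (up (/ eps)) <= INR n).
  { eapply Rle_trans with (INR (Z.to_nat (up (/ eps)))).
    rewrite INR_IZR_INZ. apply IZR_le. lia. apply le_INR; lia. }
  assert (0 < eps) by apply cond_pos.
  assert (/ eps < INR n + 1) by lra.
  assert (0 < / eps) by (apply Rinv_0_lt_compat; lra).
  rewrite <- (Rinv_inv eps). left. apply Rinv_lt_contravar. nra. auto.
Qed.

Lemma lasalle_P1 Q s r m : sys2 Q s r -> (forall t, r t < 1) ->
  (forall t, t <= 0 -> m <= Lf Q (s t) (r t)) -> P1at Q s r.
Proof.
  intros H Hr1 Hm. pose proof H as [HQ [Ds [Dr Hb]]].
  assert (Hex : forall n : nat, exists t, t <= 0 /\ Rabs (2 * s t + Q) < / (INR n + 1) /\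
                   Rabs (Ff Q (s t) (r t)) < / (INR n + 1)).
  { intros n. apply (lasalle Q s r m H Hr1 Hm). apply Rinv_0_lt_compat. pose proof (pos_INR n); lra. }
  set (tn := fun n => proj1_sig (constructive_indefinite_description _ (Hex n))).
  assert (Htn : forall n, tn n <= 0 /\ Rabs (2 * s (tn n) + Q) < / (INR n + 1) /\
                   Rabs (Ff Q (s (tn n)) (r (tn n))) < / (INR n + 1)).
  { intros n. unfold tn. destruct (constructive_indefinite_description _ (Hex n)) as [t Ht]. exact Ht. }
  assert (Lu : is_lim_seq (fun n => 2 * s (tn n) + Q) 0).
  { apply seq_small. intros n. rewrite Rminus_0_r. apply Htn. }
  assert (LF : is_lim_seq (fun n => Ff Q (s (tn n)) (r (tn n))) 0).
  { apply seq_small. intros n. rewrite Rminus_0_r. apply Htn. }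
  assert (Ls : is_lim_seq (fun n => s (tn n)) (- Q / 2)).
  { apply is_lim_seq_ext with (fun n => (2 * s (tn n) + Q - Q) * (1/2)). intros; field.
    replace (- Q / 2) with ((0 - Q) * (1/2)) by field.
    apply is_lim_seq_mult'. apply is_lim_seq_minus'. auto. apply is_lim_seq_const. apply is_lim_seq_const. }
  assert (L1 : is_lim_seq (fun n => 1 - s (tn n) ^ 2) (1 - (-Q/2) ^ 2)).
  { apply is_lim_seq_minus'. apply is_lim_seq_const.
    apply is_lim_seq_ext with (fun n => s (tn n) * s (tn n)). intros; ring.
    replace ((- Q / 2) ^ 2) with ((-Q/2) * (-Q/2)) by ring. apply is_lim_seq_mult'; auto. }
  assert (LG : is_lim_seq (fun n => Gf Q (s (tn n)) (r (tn n))) 0).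
  { apply is_lim_seq_ext with (fun n => Ff Q (s (tn n)) (r (tn n)) / (1 - s (tn n) ^ 2)).
    intros n. unfold Ff. destruct (Hb (tn n)). field. nra.
    replace 0 with (0 / (1 - (-Q/2) ^ 2)) by (field; nra).
    apply is_lim_seq_div'; auto. nra. }
  assert (Lr : is_lim_seq (fun n => r (tn n)) (rs Q)).
  { apply is_lim_seq_ext with (fun n => (Gf Q (s (tn n)) (r (tn n)) - (2 - Q) * s (tn n)) / (2 + Q * s (tn n))).
    intros n. unfold Gf. destruct (Hb (tn n)). field. nra.
    replace (rs Q) with ((0 - (2 - Q) * (-Q/2)) / (2 + Q * (-Q/2))) by (unfold rs; field; repeat split; nra).
    apply is_lim_seq_div'. apply is_lim_seq_minus'; auto. apply is_lim_seq_mult'; auto. apply is_lim_seq_const.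
    apply is_lim_seq_plus'. apply is_lim_seq_const. apply is_lim_seq_mult'; auto. apply is_lim_seq_const.
    nra. }
  apply (P1_seq Q s r tn H Hr1); auto. intros n; apply Htn.
Qed.

Definition slo Q := - Q / 2 - (2 - Q) ^ 2 / 16.
Definition g0 Q := (2 - Q) ^ 2 / 8.
Definition aa Q := (1 - slo Q ^ 2) * g0 Q.
Definition etaT Q := exp (- (Q ^ 2 / aa Q)) / 4.

Lemma consts Q : 0 < Q < 2 -> -1 < slo Q < - Q / 2 /\ 0 < g0 Q /\ 0 < aa Q /\ 0 < etaT Q <= 1/4.
Proof.
  intros HQ.
  assert (P2 : 0 < (2 - Q) ^ 2) by nra.
  assert (A : -1 < slo Q < - Q / 2) by (unfold slo; nra).
  assert (G0 : 0 < g0 Q) by (unfold g0; lra).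
  assert (S1 : 0 < 1 - slo Q ^ 2).
  { set (sl := slo Q) in *. nra. }
  assert (AA : 0 < aa Q) by (unfold aa; apply Rmult_lt_0_compat; auto).
  split; auto. split; auto. split; auto.
  unfold etaT. assert (0 < Q ^ 2 / aa Q) by (apply Rdiv_lt_0_compat; nra).
  split. apply Rdiv_lt_0_compat. apply exp_pos. lra.
  assert (exp (- (Q ^ 2 / aa Q)) <= 1).
  { rewrite <- exp_0. left. apply exp_increasing. lra. }
  lra.
Qed.

Lemma region_bounds Q s r : 0 < Q < 2 -> 1/2 < r < 1 -> slo Q < s < 0 ->
  aa Q <= (1 - s ^ 2) * Gf Q s r /\ r * (2 * s + Q) <= Q.
Proof.
  intros HQ Hr Hs. destruct (consts Q HQ) as [[C1 C2] [C3 [C4 C5]]].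
  split.
  - unfold aa. apply Rmult_le_compat.
    + unfold slo in *. nra.
    + unfold g0; nra.
    + unfold slo in *. nra.
    + unfold Gf, g0. unfold slo in Hs.
      assert (E : 2 * r * (1 + s) + (2 - Q) * (1 - r) * s - (2 - Q) ^ 2 / 8 =
                  (r - 1/2) * (2 + Q * s) + (s - slo Q) * ((4 - Q)/2) + (2 - Q) ^ 2 * Q / 32).
      { unfold slo. field. }
      assert (0 <= (r - 1/2) * (2 + Q * s)) by (apply Rmult_le_pos; nra).
      assert (0 <= (s - slo Q) * ((4 - Q)/2)) by (apply Rmult_le_pos; unfold slo; nra).
      assert (0 <= (2 - Q) ^ 2 * Q / 32) by (apply div_nonneg; [apply Rmult_le_pos; nra | lra]).
      lra.
  - destruct (Rle_lt_dec 0 (2 * s + Q)). nra. nra.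
Qed.

Lemma topedge Q s r c : sys2 Q s r -> (forall t, r t < 1) -> (forall t, t <= 0 -> s t < 0) ->
  c <= 0 -> s c = - Q / 2 -> 1 - r c <= etaT Q -> False.
Proof.
  intros H Hr1 Hneg Hc Hsc Hrc. pose proof H as [HQ [Ds [Dr Hb]]].
  destruct (consts Q HQ) as [[C1 C2] [C3 [C4 [C5 C6]]]].
  set (P := fun t => 1/2 < r t /\ slo Q < s t).
  set (Phi := fun t => ln (1 - r t) - (2 * Q / aa Q) * s t).
  set (Phid := fun t => - 2 * r t * (2 * s t + Q) + (2 * Q / aa Q) * ((1 - s t ^ 2) * Gf Q (s t) (r t))).
  assert (DPhi : forall t, derivable_pt_lim Phi t (Phid t)).
  { intros t. unfold Phi, Phid. specialize (Hr1 t). eapply Deq. dtac2. all: try lra. cbv beta. field. lra. }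
  assert (Sd : forall t, t <= 0 -> P t -> - ((1 - s t ^ 2) * Gf Q (s t) (r t)) <= - aa Q).
  { intros t Ht [Pr Ps]. specialize (Hneg t Ht).
    destruct (region_bounds Q (s t) (r t) HQ ltac:(specialize (Hr1 t); lra) ltac:(lra)). lra. }
  assert (Pd : forall t, t <= 0 -> P t -> 0 <= Phid t).
  { intros t Ht [Pr Ps]. specialize (Hneg t Ht).
    destruct (region_bounds Q (s t) (r t) HQ ltac:(specialize (Hr1 t); lra) ltac:(lra)) as [B1 B2].
    unfold Phid.
    assert (2 * Q / aa Q * ((1 - s t ^ 2) * Gf Q (s t) (r t)) >= 2 * Q / aa Q * aa Q).
    { apply Rle_ge, Rmult_le_compat_l; auto. apply div_nonneg; lra. }
    replace (2 * Q / aa Q * aa Q) with (2 * Q) in H0 by (field; lra). lra. }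
  assert (Pc : P c).
  { split. lra. lra. }
  assert (Open : forall t, P t -> exists d, 0 < d /\ forall x, Rabs (x - t) < d -> P x).
  { intros t [Pr Ps].
    destruct (open_gt r t _ (1/2) (Dr t) Pr) as [d1 [Hd1 H1]].
    destruct (open_gt s t _ (slo Q) (Ds t) Ps) as [d2 [Hd2 H2]].
    exists (Rmin d1 d2). split. apply Rmin_case; auto.
    intros x Hx. split. apply H1. eapply Rlt_le_trans; [exact Hx| apply Rmin_l].
    apply H2. eapply Rlt_le_trans; [exact Hx| apply Rmin_r]. }
  set (ts := c - Q / aa Q).
  assert (Hts : ts < c) by (unfold ts; assert (0 < Q / aa Q) by (apply Rdiv_lt_0_compat; lra); lra).
  assert (Allp : forall t, ts <= t <= c -> P t).
  { intros t0 Ht0. apply NNPP; intros nP.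
    assert (t0 < c) by (destruct Ht0 as [_ [Hlt|Heq]]; auto; subst; contradiction).
    destruct (sup_fail P t0 c) as [b [[Hb1 Hb2] [Hb3 Hb4]]]; auto.
    apply Hb3.
    assert (M1 := MVT_le s _ b c (- aa Q) Ds Hb2).
    assert (s c - s b <= - aa Q * (c - b)).
    { apply M1. intros x Hx. apply Sd. lra. apply Hb4; lra. }
    assert (M2 := MVT_ge Phi Phid b c 0 DPhi Hb2).
    assert (0 * (c - b) <= Phi c - Phi b).
    { apply M2. intros x Hx. apply Pd. lra. apply Hb4; lra. }
    assert (sb : s b < 0) by (apply Hneg; lra).
    split.
    - unfold Phi in H2. pose proof (Hr1 b). pose proof (Hr1 c).
      assert (L1 : ln (1 - r c) <= ln (etaT Q)) by (apply ln_le_mono; lra).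
      assert (L2 : ln (etaT Q) = - (Q ^ 2 / aa Q) + ln (/ 4)).
      { unfold etaT, Rdiv at 1. rewrite ln_mult, ln_exp. reflexivity. apply exp_pos. lra. }
      assert (L3 : 2 * Q / aa Q * (s b - s c) < Q ^ 2 / aa Q).
      { replace (Q ^ 2 / aa Q) with (2 * Q / aa Q * (Q / 2)) by (field; lra).
        apply Rmult_lt_compat_l. apply Rdiv_lt_0_compat; lra. lra. }
      assert (L4 : ln (1 - r b) < ln (/ 4)) by lra.
      apply ln_lt_inv in L4; [lra | lra | lra].
    - assert (aa Q * (c - b) >= 0) by (apply Rle_ge, Rmult_le_pos; lra). lra. }
  assert (M := MVT_le s _ ts c (- aa Q) Ds Hts).
  assert (s c - s ts <= - aa Q * (c - ts)).
  { apply M. intros x Hx. apply Sd. lra. apply Allp; lra. }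
  assert (aa Q * (c - ts) = Q) by (unfold ts; field; lra).
  assert (s ts < 0) by (apply Hneg; lra). lra.
Qed.

Definition sd Q (s r : R -> R) t := - ((1 - s t ^ 2) * Gf Q (s t) (r t)).
Definition rd Q (s r : R -> R) t := 2 * r t * (1 - r t) * (2 * s t + Q).
Definition Gd Q (s r : R -> R) t := (2 * r t + (2 - Q) * (1 - r t)) * sd Q s r t + (2 + Q * s t) * rd Q s r t.

Lemma D_G Q s r : sys2 Q s r -> forall t, derivable_pt_lim (fun t => Gf Q (s t) (r t)) t (Gd Q s r t).
Proof.
  intros [HQ [Ds [Dr Hb]]] t. unfold Gf, Gd, sd, rd. eapply Deq. dtac2. cbv beta. ring.
Qed.

Lemma D_u Q s r : sys2 Q s r -> forall t, derivable_pt_lim (fun t => 2 * s t + Q) t (2 * sd Q s r t).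
Proof.
  intros [HQ [Ds [Dr Hb]]] t. unfold sd. eapply Deq. dtac2. cbv beta. ring.
Qed.

Lemma G_at_P1 Q r : 0 < Q < 2 -> Gf Q (- Q / 2) r = (2 - Q) * ((2 + Q) * r - Q) / 2.
Proof. intros. unfold Gf. field. Qed.

Lemma G_zero_P1 Q r : 0 < Q < 2 -> Gf Q (- Q / 2) r = 0 -> r = rs Q.
Proof.
  intros HQ H. rewrite G_at_P1 in H; auto.
  assert (H2 : (2 - Q) * ((2 + Q) * r - Q) = 0) by lra.
  apply Rmult_integral in H2. destruct H2 as [H2|H2]; [lra|].
  unfold rs. apply Rmult_eq_reg_l with (2 + Q); [|lra].
  replace ((2 + Q) * (Q / (2 + Q))) with Q by (field; lra). lra.
Qed.

Lemma caseB Q s r T : sys2 Q s r -> (forall t, r t < 1) -> (forall t, t <= 0 -> s t < 0) ->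
  ~ P1at Q s r -> T <= 0 -> (forall t, t <= T -> 0 < 2 * s t + Q) ->
  is_lim s m_infty 0 /\ is_lim r m_infty 0.
Proof.
  intros H Hr1 Hneg nP HT Hu. pose proof H as [HQ [Ds [Dr Hb]]].
  assert (Rup : forall a b, a <= b <= T -> r a <= r b).
  { apply (mono_up r _ T Dr). intros t Ht. specialize (Hu t Ht). destruct (Hb t). specialize (Hr1 t).
    apply Rmult_le_pos; [|lra]. apply Rmult_le_pos; lra. }
  destruct (classic (exists t1, t1 <= T /\ Gf Q (s t1) (r t1) < 0)) as [[t1 [Ht1 HG1]]|HnG].
  - exfalso.
    assert (Gneg : forall t, t <= t1 -> Gf Q (s t) (r t) < 0).
    { apply (crossing _ (Gd Q s r) t1 (D_G Q s r H)); auto.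
      intros t Ht HG. unfold Gd, sd, rd. rewrite HG. specialize (Hu t ltac:(lra)). destruct (Hb t). specialize (Hr1 t).
      assert (0 < 2 + Q * s t) by nra.
      assert (0 < 2 * r t * (1 - r t) * (2 * s t + Q)).
      { apply Rmult_lt_0_compat; [|lra]. apply Rmult_lt_0_compat; lra. }
      nra. }
    destruct (mono_lim_up s t1 (- Q / 2)) as [ls [Hls [Hls1 Hls2]]].
    { apply (mono_up s _ t1 Ds). intros t Ht. specialize (Gneg t Ht). destruct (Hb t).
      assert (0 < 1 - s t ^ 2) by nra.
      assert ((1 - s t ^ 2) * Gf Q (s t) (r t) < 0) by (apply Ropp_lt_cancel; rewrite Ropp_0, Ropp_mult_distr_r; apply Rmult_lt_0_compat; lra).
      lra. }
    { intros t Ht. specialize (Hu t ltac:(lra)). lra. }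
    destruct (mono_lim_up r t1 0) as [lr [Hlr [Hlr1 Hlr2]]].
    { intros a b Hab; apply Rup; lra. }
    { intros t _. destruct (Hb t); lra. }
    destruct (deriv_lims Q s r ls lr H Hls Hlr) as [E1 E2].
    assert (ls <= s t1) by (apply Hls1; lra). assert (s t1 < 0) by (apply Hneg; lra).
    assert (lr <= r t1) by (apply Hlr1; lra). pose proof (Hr1 t1).
    assert (EG : Gf Q ls lr = 0).
    { apply Rmult_integral in E1. destruct E1; auto. nra. }
    destruct (Req_dec lr 0) as [Hl0|Hl0].
    { rewrite Hl0 in EG. unfold Gf in EG. nra. }
    assert (Eu : 2 * ls + Q = 0).
    { apply Rmult_integral in E2. destruct E2 as [E2|E2]; auto.
      apply Rmult_integral in E2. destruct E2 as [E2|E2]; nra. }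
    assert (ls = - Q / 2) by lra. subst ls.
    apply G_zero_P1 in EG; auto. subst lr.
    apply nP. apply P1_lim; auto.
  - assert (Gnn : forall t, t <= T -> 0 <= Gf Q (s t) (r t)).
    { intros t Ht. apply Rnot_lt_le. intros HG. apply HnG. exists t; auto. }
    destruct (mono_lim_down s T 0) as [ls [Hls [Hls1 Hls2]]].
    { apply (mono_down s _ T Ds). intros t Ht. specialize (Gnn t Ht). destruct (Hb t).
      assert (0 <= (1 - s t ^ 2) * Gf Q (s t) (r t)) by (apply Rmult_le_pos; nra). lra. }
    { intros t Ht. specialize (Hneg t ltac:(lra)); lra. }
    destruct (mono_lim_up r T 0) as [lr [Hlr [Hlr1 Hlr2]]].
    { auto. }
    { intros t _. destruct (Hb t); lra. }
    destruct (deriv_lims Q s r ls lr H Hls Hlr) as [E1 E2].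
    assert (s T <= ls) by (apply Hls1; lra). specialize (Hu T ltac:(lra)).
    assert (lr <= r T) by (apply Hlr1; lra). pose proof (Hr1 T). destruct (Hb T).
    assert (lr = 0).
    { apply Rmult_integral in E2. destruct E2 as [E2|E2]; [|lra].
      apply Rmult_integral in E2. destruct E2 as [E2|E2]; lra. }
    subst lr. unfold Gf in E1.
    assert (ls = 0).
    { apply Rmult_integral in E1. destruct E1 as [E1|E1]. nra. nra. }
    subst ls. split; auto.
Qed.

Lemma caseC Q s r T : sys2 Q s r -> (forall t, r t < 1) -> (forall t, t <= 0 -> s t < 0) ->
  ~ P1at Q s r -> T <= 0 -> (forall t, t <= T -> 2 * s t + Q < 0) -> False.
Proof.
  intros H Hr1 Hneg nP HT Hu. pose proof H as [HQ [Ds [Dr Hb]]].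
  assert (Rdn : forall a b, a <= b <= T -> r b <= r a).
  { apply (mono_down r _ T Dr). intros t Ht. specialize (Hu t Ht). destruct (Hb t). specialize (Hr1 t).
    assert (0 <= 2 * r t * (1 - r t)) by (apply Rmult_le_pos; lra).
    assert (0 <= 2 * r t * (1 - r t) * (- (2 * s t + Q))) by (apply Rmult_le_pos; lra). lra. }
  destruct (classic (exists t1, t1 <= T /\ 0 < Gf Q (s t1) (r t1))) as [[t1 [Ht1 HG1]]|HnG].
  - assert (Gpos : forall t, t <= t1 -> 0 < Gf Q (s t) (r t)).
    { intros t Ht. assert (- Gf Q (s t) (r t) < 0); [|lra].
      apply (crossing (fun t => - Gf Q (s t) (r t)) (fun t => - Gd Q s r t) t1); auto.
      intros x; apply Dopp, D_G; auto.
      intros x Hx HG. assert (HG' : Gf Q (s x) (r x) = 0) by lra.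
      unfold Gd, sd, rd. rewrite HG'. specialize (Hu x ltac:(lra)). destruct (Hb x). specialize (Hr1 x).
      assert (0 < 2 + Q * s x) by nra.
      assert (0 < 2 * r x * (1 - r x) * (- (2 * s x + Q))).
      { apply Rmult_lt_0_compat; [|lra]. apply Rmult_lt_0_compat; lra. }
      nra. lra. }
    destruct (mono_lim_down s t1 (- Q / 2)) as [ls [Hls [Hls1 Hls2]]].
    { apply (mono_down s _ t1 Ds). intros t Ht. specialize (Gpos t Ht). destruct (Hb t).
      assert (0 <= (1 - s t ^ 2) * Gf Q (s t) (r t)) by (apply Rmult_le_pos; nra). lra. }
    { intros t Ht. specialize (Hu t ltac:(lra)). lra. }
    destruct (mono_lim_down r t1 1) as [lr [Hlr [Hlr1 Hlr2]]].
    { intros a b Hab; apply Rdn; lra. }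
    { intros t _. destruct (Hb t); lra. }
    destruct (deriv_lims Q s r ls lr H Hls Hlr) as [E1 E2].
    assert (s t1 <= ls) by (apply Hls1; lra). destruct (Hb t1).
    assert (r t1 <= lr) by (apply Hlr1; lra).
    assert (EG : Gf Q ls lr = 0).
    { apply Rmult_integral in E1. destruct E1; auto. nra. }
    destruct (Req_dec lr 1) as [Hl1|Hl1].
    { rewrite Hl1 in EG. unfold Gf in EG. nra. }
    assert (Eu : 2 * ls + Q = 0).
    { apply Rmult_integral in E2. destruct E2 as [E2|E2]; auto.
      apply Rmult_integral in E2. destruct E2 as [E2|E2]; lra. }
    assert (ls = - Q / 2) by lra. subst ls.
    apply G_zero_P1 in EG; auto. subst lr.
    apply nP. apply P1_lim; auto.
  - assert (Gnp : forall t, t <= T -> Gf Q (s t) (r t) <= 0).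
    { intros t Ht. apply Rnot_lt_le. intros HG. apply HnG. exists t; auto. }
    destruct (mono_lim_up s T (-1)) as [ls [Hls [Hls1 Hls2]]].
    { apply (mono_up s _ T Ds). intros t Ht. specialize (Gnp t Ht). destruct (Hb t).
      assert (0 <= (1 - s t ^ 2) * (- Gf Q (s t) (r t))) by (apply Rmult_le_pos; nra). lra. }
    { intros t _. destruct (Hb t); lra. }
    destruct (mono_lim_down r T 1) as [lr [Hlr [Hlr1 Hlr2]]].
    { auto. }
    { intros t _. destruct (Hb t); lra. }
    destruct (deriv_lims Q s r ls lr H Hls Hlr) as [E1 E2].
    assert (ls <= s T) by (apply Hls1; lra). pose proof (Hu T ltac:(lra)). pose proof (Hneg T HT).
    assert (r T <= lr) by (apply Hlr1; lra). destruct (Hb T).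
    assert (lr = 1).
    { apply Rmult_integral in E2. destruct E2 as [E2|E2]; [|lra].
      apply Rmult_integral in E2. destruct E2 as [E2|E2]; lra. }
    subst lr. unfold Gf in E1.
    assert (ls = -1).
    { replace ((2 - Q) * (1 - 1) * ls) with 0 in E1 by ring.
      apply Rmult_integral in E1. destruct E1 as [E1|E1]; nra. }
    subst ls.
    set (K := fun t => ln (1 + s t) + ln (r t) - ln (1 - r t)).
    set (Kd := fun t => - ((1 - s t) * Gf Q (s t) (r t)) + 2 * (2 * s t + Q)).
    assert (DK : forall t, derivable_pt_lim K t (Kd t)).
    { intros t. unfold K, Kd. destruct (Hb t). specialize (Hr1 t).
      eapply Deq. dtac2. all: try lra. cbv beta. unfold Gf. field. lra. }
    assert (LK : is_lim Kd m_infty (- ((1 - -1) * Gf Q (-1) 1) + 2 * (2 * -1 + Q))).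
    { unfold Kd, Gf. ltac_. }
    apply (DL_neg K Kd _ 0 T DK LK).
    { unfold Gf. lra. }
    intros t Ht. unfold K. destruct (Hb t). specialize (Hr1 t). specialize (Gnp t Ht).
    assert (Hx : (1 + s t) * r t <= 1 - r t).
    { unfold Gf in Gnp. pose proof (Hneg t ltac:(lra)).
      assert (0 <= (2 - Q) * (1 - r t)) by nra. nra. }
    rewrite <- ln_mult by lra.
    assert (ln ((1 + s t) * r t) <= ln (1 - r t)) by (apply ln_le_mono; nra).
    lra.
Qed.

Lemma noP1_before Q s r t : sys2 Q s r -> (forall t, r t < 1) -> ~ P1at Q s r -> t <= 0 ->
  s t = - Q / 2 -> Gf Q (s t) (r t) <> 0.
Proof.
  intros H Hr1 nP Ht Hs HG. pose proof H as [HQ [Ds [Dr Hb]]].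
  rewrite Hs in HG. apply G_zero_P1 in HG; auto.
  assert (E : Lf Q (s t) (r t) = Lstar Q) by (rewrite Hs, HG; reflexivity).
  pose proof (L_mono Q s r H Hr1 t 0 Ht).
  destruct (Hb 0) as [Hs0 Hr0].
  destruct (L_max Q (s 0) (r 0) HQ Hs0 ltac:(specialize (Hr1 0); lra)) as [M1 M2].
  apply nP. apply M2. lra.
Qed.

Lemma strict_sign Q s r : sys2 Q s r -> (forall t, r t < 1) -> ~ P1at Q s r ->
  forall t, t <= 0 -> 2 * s t + Q = 0 ->
  exists t1 t2, t - 1 < t1 < t /\ t < t2 < t + 1 /\
     ((2 * s t1 + Q < 0 /\ 0 < 2 * s t2 + Q) \/ (0 < 2 * s t1 + Q /\ 2 * s t2 + Q < 0)).
Proof.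
  intros H Hr1 nP t Ht Hu. pose proof H as [HQ [Ds [Dr Hb]]].
  assert (HG := noP1_before Q s r t H Hr1 nP Ht ltac:(lra)).
  destruct (Hb t) as [Hs Hr].
  assert (P : 0 < 1 - s t ^ 2) by nra.
  destruct (Rlt_or_le 0 (Gf Q (s t) (r t))) as [Gp|Gn].
  - destruct (deriv_neg_local _ t _ (D_u Q s r H t)) as [d [Hd Hl]].
    { unfold sd. assert (0 < (1 - s t ^ 2) * Gf Q (s t) (r t)) by (apply Rmult_lt_0_compat; lra). lra. }
    set (h := Rmin (d/2) (1/2)). assert (0 < h < d /\ h < 1) by (unfold h; apply Rmin_case_strong; lra).
    destruct (Hl h ltac:(lra)). exists (t - h), (t + h). split; [lra|split; [lra|]]. right; lra.
  - assert (Gn' : Gf Q (s t) (r t) < 0) by (destruct Gn; auto; contradiction).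
    destruct (deriv_pos_local _ t _ (D_u Q s r H t)) as [d [Hd Hl]].
    { unfold sd. assert (0 < (1 - s t ^ 2) * - Gf Q (s t) (r t)) by (apply Rmult_lt_0_compat; lra). lra. }
    set (h := Rmin (d/2) (1/2)). assert (0 < h < d /\ h < 1) by (unfold h; apply Rmin_case_strong; lra).
    destruct (Hl h ltac:(lra)). exists (t - h), (t + h). split; [lra|split; [lra|]]. left; lra.
Qed.

Lemma caseA Q s r : sys2 Q s r -> (forall t, r t < 1) -> (forall t, t <= 0 -> s t < 0) ->
  ~ P1at Q s r -> (forall m, exists t, t <= 0 /\ Lf Q (s t) (r t) < m) ->
  (forall T, T <= 0 -> exists t, t <= T /\ 2 * s t + Q <= 0) ->
  (forall T, T <= 0 -> exists t, t <= T /\ 0 <= 2 * s t + Q) -> False.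
Proof.
  intros H Hr1 Hneg nP Hinf HB HC. pose proof H as [HQ [Ds [Dr Hb]]].
  destruct (consts Q HQ) as [[C1 C2] [C3 [C4 [C5 C6]]]].
  assert (SN : forall T, T <= 0 -> exists t, t <= T /\ 2 * s t + Q < 0).
  { intros T HT. destruct (HB (T - 1) ltac:(lra)) as [t [Ht Hu]].
    destruct Hu as [Hu|Hu]. exists t; split; auto; lra.
    destruct (strict_sign Q s r H Hr1 nP t ltac:(lra) Hu) as [t1 [t2 [H1 [H2 [[H3 H4]|[H3 H4]]]]]].
    exists t1; split; auto; lra. exists t2; split; auto; lra. }
  assert (SP : forall T, T <= 0 -> exists t, t <= T /\ 0 < 2 * s t + Q).
  { intros T HT. destruct (HC (T - 1) ltac:(lra)) as [t [Ht Hu]].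
    destruct Hu as [Hu|Hu]. exists t; split; auto; lra.
    destruct (strict_sign Q s r H Hr1 nP t ltac:(lra) ltac:(lra)) as [t1 [t2 [H1 [H2 [[H3 H4]|[H3 H4]]]]]].
    exists t2; split; auto; lra. exists t1; split; auto; lra. }
  set (m0 := (2 + Q) * Af Q (- Q / 2) + 2 * ln (etaT Q) + Q * ln (rs Q)).
  destruct (Hinf m0) as [tm [Htm Hlm]].
  destruct (SN tm Htm) as [tb [Htb Hub]].
  destruct (SP (tb - 1) ltac:(lra)) as [ta [Hta Hua]].
  destruct (sup_fail (fun x => 2 * s x + Q < 0) ta tb ltac:(lra) Hub ltac:(intro; lra)) as [c [[Hc1 Hc2] [Hc3 Hc4]]].
  { intros x Hx. destruct (open_lt _ x _ 0 (D_u Q s r H x) Hx) as [d [Hd H2]]. exists d; auto. }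
  assert (uc : 2 * s c + Q = 0).
  { apply Rnot_lt_le in Hc3. destruct Hc3 as [Hc3|Hc3]; [|lra]. exfalso.
    destruct (open_gt _ c _ 0 (D_u Q s r H c) Hc3) as [d [Hd H2]].
    set (x := Rmin (c + d/2) tb).
    assert (c < x <= tb) by (unfold x; apply Rmin_case_strong; lra).
    assert (2 * s x + Q < 0) by (apply Hc4; lra).
    assert (0 < 2 * s x + Q). { apply H2. unfold x. apply Rmin_case_strong; intros; rewrite Rabs_right; lra. }
    lra. }
  assert (Gc : 0 <= Gf Q (s c) (r c)).
  { apply Rnot_lt_le. intros Gn. destruct (Hb c) as [Hs Hr].
    destruct (deriv_pos_local _ c _ (D_u Q s r H c)) as [d [Hd Hl]].
    { unfold sd. assert (0 < (1 - s c ^ 2) * - Gf Q (s c) (r c)) by (apply Rmult_lt_0_compat; nra). lra. }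
    set (h := Rmin (d/2) ((tb - c)/2)). assert (0 < h < d /\ h < tb - c) by (unfold h; apply Rmin_case_strong; lra).
    destruct (Hl h ltac:(lra)). assert (2 * s (c + h) + Q < 0) by (apply Hc4; lra). lra. }
  assert (sc : s c = - Q / 2) by lra.
  rewrite sc in Gc. rewrite G_at_P1 in Gc; auto.
  assert (rc : rs Q <= r c).
  { unfold rs. apply Rmult_le_reg_l with (2 + Q). lra.
    replace ((2 + Q) * (Q / (2 + Q))) with Q by (field; lra).
    assert (0 <= (2 + Q) * r c - Q).
    { apply Rmult_le_reg_l with ((2 - Q)/2). lra. lra. } lra. }
  assert (Lc : Lf Q (s c) (r c) < m0).
  { eapply Rle_lt_trans; [|exact Hlm]. apply (L_mono Q s r H Hr1). lra. }
  apply (topedge Q s r c H Hr1 Hneg ltac:(lra) sc).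
  apply Rnot_lt_le. intros Hbig.
  rewrite sc in Lc. unfold Lf, Bf, m0 in Lc.
  destruct (rs_bounds Q HQ). pose proof (Hr1 c).
  assert (ln (etaT Q) < ln (1 - r c)) by (apply ln_increasing; lra).
  assert (ln (rs Q) <= ln (r c)) by (apply ln_le_mono; lra).
  nra.
Qed.

Lemma nonvac Q s r : sys2 Q s r -> (forall t, r t < 1) -> (forall t, t <= 0 -> s t < 0) ->
  ~ P1at Q s r -> is_lim s m_infty 0 /\ is_lim r m_infty 0.
Proof.
  intros H Hr1 Hneg nP.
  destruct (classic (exists m, forall t, t <= 0 -> m <= Lf Q (s t) (r t))) as [[m Hm]|Hnm].
  { exfalso. apply nP. apply (lasalle_P1 Q s r m H Hr1 Hm). }
  assert (Hinf : forall m, exists t, t <= 0 /\ Lf Q (s t) (r t) < m).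
  { intros m. apply NNPP. intros Hn. apply Hnm. exists m. intros t Ht.
    apply Rnot_lt_le. intros Hl. apply Hn. exists t; auto. }
  destruct (classic (exists T, T <= 0 /\ forall t, t <= T -> 0 < 2 * s t + Q)) as [[T [HT HB]]|nB].
  { apply (caseB Q s r T); auto. }
  destruct (classic (exists T, T <= 0 /\ forall t, t <= T -> 2 * s t + Q < 0)) as [[T [HT HC]]|nC].
  { exfalso. apply (caseC Q s r T); auto. }
  exfalso. apply (caseA Q s r H Hr1 Hneg nP Hinf).
  - intros T HT. apply NNPP; intros Hn. apply nB. exists T. split; auto.
    intros t Ht. apply Rnot_le_lt. intros Hl. apply Hn. exists t; auto.
  - intros T HT. apply NNPP; intros Hn. apply nC. exists T. split; auto.
    intros t Ht. apply Rnot_le_lt. intros Hl. apply Hn. exists t; auto.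
Qed.

Theorem main2D Q s r : sys2 Q s r -> ((forall t, r t = 1) \/ (forall t, r t < 1)) ->
  is_lim s m_infty 1 \/ (is_lim s m_infty 0 /\ is_lim r m_infty 0) \/ P1at Q s r.
Proof.
  intros H Hv.
  destruct (classic (exists t0, t0 <= 0 /\ 0 <= s t0)) as [Hex|Hnex].
  { left. apply (partA Q s r H Hex). }
  assert (Hneg : forall t, t <= 0 -> s t < 0).
  { intros t Ht. apply Rnot_le_lt. intros Hl. apply Hnex. exists t; auto. }
  destruct Hv as [Hv|Hv].
  { exfalso. apply (vacuum Q s r H Hv Hneg). }
  destruct (classic (P1at Q s r)) as [P|nP]; [right; right; auto|].
  right; left. apply (nonvac Q s r); auto.
Qed.

Lemma abs_le_1sq a : Rabs a <= 1 + a ^ 2.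
Proof. apply Rabs_le. split; nra. Qed.

Lemma lim_sq_0 f : is_lim (fun t => f t ^ 2) m_infty 0 -> (forall t, 0 <= f t) -> is_lim f m_infty 0.
Proof.
  intros H Hp. apply lim_minf_intro. intros eps He.
  destruct (lim_minf_elim _ 0 H (eps * eps) ltac:(nra)) as [M HM].
  exists M. intros t Ht. specialize (HM t Ht). specialize (Hp t).
  rewrite Rminus_0_r in *. rewrite Rabs_right in * by nra.
  apply Rnot_le_lt. intros Hl. nra.
Qed.


Lemma reduce (g : R) (hg : 2 / 3 < g < 2) (x : State) (sol : R -> State)
  (hxS : inS x) (hsol : is_solution g sol) (h0 : sol 0 = x) :
  (forall t, Sm (sol t) = 0 /\ Np (sol t) = 0 /\ Om (sol t) + Sp (sol t) ^ 2 + Nm (sol t) ^ 2 = 1 /\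
             0 < Nm (sol t) /\ 0 <= Om (sol t)) /\
  ((forall t, Om (sol t) = 0) \/ (forall t, 0 < Om (sol t))).
Proof.
  set (Q := qstar g). assert (HQ : 0 < Q < 2) by (unfold Q, qstar; lra).
  assert (dSp : forall t, derivable_pt_lim (fun s => Sp (sol s)) t (- (2 - qfun g (sol t)) * Sp (sol t) - 2 * Nm (sol t) ^ 2))
    by (intros t; destruct (hsol t) as [A _]; exact A).
  assert (dSm : forall t, derivable_pt_lim (fun s => Sm (sol s)) t (- (2 - qfun g (sol t)) * Sm (sol t) - 2 * sqrt 3 * Np (sol t) * Nm (sol t)))
    by (intros t; destruct (hsol t) as [_ [A _]]; exact A).
  assert (dNp : forall t, derivable_pt_lim (fun s => Np (sol s)) t ((qfun g (sol t) + 2 * Sp (sol t)) * Np (sol t) + 2 * sqrt 3 * Sm (sol t) * Nm (sol t)))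
    by (intros t; destruct (hsol t) as [_ [_ [A _]]]; exact A).
  assert (dNm : forall t, derivable_pt_lim (fun s => Nm (sol s)) t ((qfun g (sol t) + 2 * Sp (sol t)) * Nm (sol t) + 2 * sqrt 3 * Sm (sol t) * Np (sol t)))
    by (intros t; destruct (hsol t) as [_ [_ [_ [A _]]]]; exact A).
  assert (dOm : forall t, derivable_pt_lim (fun s => Om (sol s)) t (2 * (qfun g (sol t) - qstar g) * Om (sol t)))
    by (intros t; destruct (hsol t) as [_ [_ [_ [_ A]]]]; exact A).
  destruct hxS as [[HB1 [HB2 HB3]] [HS1 HS2]]. rewrite <- h0 in *.
  assert (Cons : forall t, Om (sol t) + Sp (sol t) ^ 2 + Sm (sol t) ^ 2 + Nm (sol t) ^ 2 - 1 = 0).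
  { apply (gronwall_zero _ (fun t => 2 * qfun g (sol t) * (Om (sol t) + Sp (sol t) ^ 2 + Sm (sol t) ^ 2 + Nm (sol t) ^ 2 - 1))
       (fun t => 1 + (2 * qfun g (sol t)) ^ 2) 0).
    - intros t. eapply Deq. dtac. cbv beta. unfold qfun. ring.
    - intros t. eapply D_cont. unfold qfun. dtac.
    - intros t. rewrite Rabs_mult. apply Rmult_le_compat_r. apply Rabs_pos. apply abs_le_1sq.
    - lra. }
  assert (Shear : forall t, Sm (sol t) ^ 2 + Np (sol t) ^ 2 = 0).
  { apply (gronwall_zero _ (fun t => - 2 * (2 - qfun g (sol t)) * Sm (sol t) ^ 2 + 2 * (qfun g (sol t) + 2 * Sp (sol t)) * Np (sol t) ^ 2)
       (fun t => 2 * (1 + (2 - qfun g (sol t)) ^ 2) + 2 * (1 + (qfun g (sol t) + 2 * Sp (sol t)) ^ 2)) 0).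
    - intros t. eapply Deq. dtac. cbv beta. ring.
    - intros t. eapply D_cont. unfold qfun. dtac.
    - intros t. set (a := 2 - qfun g (sol t)). set (b := qfun g (sol t) + 2 * Sp (sol t)).
      set (X := Sm (sol t) ^ 2). set (Y := Np (sol t) ^ 2).
      assert (0 <= X) by (unfold X; nra). assert (0 <= Y) by (unfold Y; nra).
      rewrite (Rabs_right (X + Y)) by lra.
      assert (0 <= 1 + a ^ 2 - a) by nra. assert (0 <= 1 + a ^ 2 + a) by nra.
      assert (0 <= 1 + b ^ 2 - b) by nra. assert (0 <= 1 + b ^ 2 + b) by nra.
      apply Rabs_le. split; nra.
    - rewrite HS1, HS2. ring. }
  assert (SmZ : forall t, Sm (sol t) = 0) by (intros t; specialize (Shear t); nra).
  assert (NpZ : forall t, Np (sol t) = 0) by (intros t; specialize (Shear t); nra).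
  assert (NmP : forall t, 0 < Nm (sol t)).
  { apply (pos_persist _ _ (fun t => 1 + (qfun g (sol t) + 2 * Sp (sol t)) ^ 2) 0 dNm).
    - intros t. eapply D_cont. unfold qfun. dtac.
    - intros t. rewrite SmZ, NpZ. replace ((qfun g (sol t) + 2 * Sp (sol t)) * Nm (sol t) + 2 * sqrt 3 * 0 * 0)
        with ((qfun g (sol t) + 2 * Sp (sol t)) * Nm (sol t)) by ring.
      rewrite Rabs_mult. apply Rmult_le_compat_r. apply Rabs_pos. apply abs_le_1sq.
    - pose proof (Rabs_pos (Np (sol 0))). lra. }
  assert (OmB : forall t, Rabs (2 * (qfun g (sol t) - qstar g) * Om (sol t)) <= (1 + (2 * (qfun g (sol t) - qstar g)) ^ 2) * Rabs (Om (sol t))).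
  { intros t. rewrite Rabs_mult. apply Rmult_le_compat_r. apply Rabs_pos. apply abs_le_1sq. }
  assert (OmC : forall t, continuity_pt (fun t => 1 + (2 * (qfun g (sol t) - qstar g)) ^ 2) t).
  { intros t. eapply D_cont. unfold qfun. dtac. }
  assert (Dich : (forall t, Om (sol t) = 0) \/ (forall t, 0 < Om (sol t))).
  { destruct HB2 as [HB2|HB2].
    - right. apply (pos_persist _ _ _ 0 dOm OmC OmB HB2).
    - left. apply (gronwall_zero _ _ _ 0 dOm OmC OmB). auto. }
  split; [|exact Dich].
  intros t. repeat split; auto.
  - specialize (Cons t). rewrite SmZ in Cons. lra.
  - destruct Dich as [D|D]; specialize (D t); lra.
Qed.

Theorem mainTheorem3 (g : R) (hg : 2 / 3 < g < 2)
  (x : State) (sol : R -> State)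
  (hxS : inS x) (hxP : x <> P1plus g)
  (hsol : is_solution g sol) (h0 : sol 0 = x)
  (hF : ~ inFVI0 sol x) :
  conv_minf sol Q1.
Proof.
  destruct (reduce g hg x sol hxS hsol h0) as [Inv Dich].
  set (Q := qstar g). assert (HQ : 0 < Q < 2) by (unfold Q, qstar; lra).
  assert (dSp : forall t, derivable_pt_lim (fun s => Sp (sol s)) t (- (2 - qfun g (sol t)) * Sp (sol t) - 2 * Nm (sol t) ^ 2))
    by (intros t; destruct (hsol t) as [A _]; exact A).
  assert (dNm : forall t, derivable_pt_lim (fun s => Nm (sol s)) t ((qfun g (sol t) + 2 * Sp (sol t)) * Nm (sol t) + 2 * sqrt 3 * Sm (sol t) * Np (sol t)))
    by (intros t; destruct (hsol t) as [_ [_ [_ [A _]]]]; exact A).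
  set (s := fun t => Sp (sol t)).
  set (r := fun t => Nm (sol t) ^ 2 / (1 - Sp (sol t) ^ 2)).
  assert (Pos : forall t, 0 < 1 - Sp (sol t) ^ 2).
  { intros t. destruct (Inv t) as [_ [_ [C [N O]]]]. nra. }
  assert (Sys : sys2 Q s r).
  { split; [auto|split; [|split]].
    - intros t. unfold s, r. eapply Deq. apply dSp.
      destruct (Inv t) as [Sm0 [Np0 [C [N O]]]]. specialize (Pos t).
      unfold qfun, Gf. rewrite Sm0. fold Q.
      replace (Om (sol t)) with (1 - Sp (sol t) ^ 2 - Nm (sol t) ^ 2) by lra.
      field. lra.
    - intros t. unfold s, r. eapply Deq. dtac. all: try (specialize (Pos t); lra).
      destruct (Inv t) as [Sm0 [Np0 [C [N O]]]]. specialize (Pos t).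
      cbv beta. unfold qfun. rewrite Sm0, Np0. fold Q.
      replace (Om (sol t)) with (1 - Sp (sol t) ^ 2 - Nm (sol t) ^ 2) by lra.
      field. lra.
    - intros t. unfold s, r. destruct (Inv t) as [Sm0 [Np0 [C [N O]]]]. specialize (Pos t).
      split. split; nra. split. apply Rdiv_lt_0_compat; nra.
      apply Rmult_le_reg_r with (1 - Sp (sol t) ^ 2); auto. unfold Rdiv.
      rewrite Rmult_assoc, Rinv_l; lra. }
  assert (Vac : (forall t, r t = 1) \/ (forall t, r t < 1)).
  { destruct Dich as [D|D]; [left|right]; intros t; unfold r; destruct (Inv t) as [Sm0 [Np0 [C [N O]]]];
      specialize (Pos t); specialize (D t).
    - apply Rmult_eq_reg_r with (1 - Sp (sol t) ^ 2); [|lra]. unfold Rdiv.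
      rewrite Rmult_assoc, Rinv_l; lra.
    - apply Rmult_lt_reg_r with (1 - Sp (sol t) ^ 2); auto. unfold Rdiv.
      rewrite Rmult_assoc, Rinv_l; lra. }
  assert (Const0 : forall (f : R -> R), (forall t, f t = 0) -> is_lim f m_infty 0).
  { intros f Hf. apply is_lim_ext with (fun _ => 0). intros; auto. apply is_lim_const'. }
  destruct (main2D Q s r Sys Vac) as [L1|[[L2 L3]|P]].
  -
    assert (L1s : is_lim (fun t => 1 - Sp (sol t) ^ 2) m_infty 0).
    { apply is_lim_eq with (1 - 1 ^ 2). ltac_. ring. }
    unfold conv_minf, Q1; simpl. split; [|split; [|split; [|split]]].
    + exact L1.
    + apply Const0. intros t; apply Inv.
    + apply Const0. intros t; apply Inv.
    + apply lim_sq_0. 2: intros t; destruct (Inv t) as [_ [_ [_ [N _]]]]; lra.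
      apply (is_lim_le_le_loc (fun _ => 0) (fun t => 1 - Sp (sol t) ^ 2)). exists 0. intros t _.
      destruct (Inv t) as [_ [_ [C [N O]]]]. split; nra.
      apply is_lim_const'. auto.
    + apply (is_lim_le_le_loc (fun _ => 0) (fun t => 1 - Sp (sol t) ^ 2)). exists 0. intros t _.
      destruct (Inv t) as [_ [_ [C [N O]]]]. split; nra.
      apply is_lim_const'. auto.
  -
    exfalso. apply hF. split. destruct hxS; auto.
    assert (LN2 : is_lim (fun t => Nm (sol t) ^ 2) m_infty 0).
    { apply is_lim_ext with (fun t => r t * (1 - s t ^ 2)).
      intros t; unfold r, s. specialize (Pos t). field. lra.
      apply is_lim_eq with (0 * (1 - 0 ^ 2)). ltac_. ring. }
    unfold conv_minf, Fpt; simpl. split; [|split; [|split; [|split]]].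
    + exact L2.
    + apply Const0. intros t; apply Inv.
    + apply Const0. intros t; apply Inv.
    + apply lim_sq_0; auto. intros t; destruct (Inv t) as [_ [_ [_ [N _]]]]; lra.
    + apply is_lim_ext with (fun t => 1 - s t ^ 2 - Nm (sol t) ^ 2).
      intros t. unfold s. destruct (Inv t) as [_ [_ [C _]]]. lra.
      apply is_lim_eq with (1 - 0 ^ 2 - 0). ltac_. ring.
  -
    exfalso. apply hxP. destruct P as [Ps Pr]. unfold s, r in Ps, Pr. rewrite h0 in Ps, Pr.
    destruct (Inv 0) as [Sm0 [Np0 [C [N O]]]]. rewrite h0 in Sm0, Np0, C, N, O.
    assert (N2 : Nm x ^ 2 = Q * (2 - Q) / 4).
    { rewrite Ps in Pr. unfold rs in Pr.
      assert (0 < 1 - (- Q / 2) ^ 2) by nra.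
      apply Rmult_eq_compat_r with (r := 1 - (- Q / 2) ^ 2) in Pr.
      unfold Rdiv at 1 in Pr. rewrite Rmult_assoc, Rinv_l in Pr by lra.
      rewrite Rmult_1_r in Pr. rewrite Pr. field. lra. }
    assert (Nx : Nm x = sqrt (Q * (2 - Q)) / 2).
    { assert (E : Q * (2 - Q) = (2 * Nm x) ^ 2) by nra.
      rewrite E. rewrite sqrt_pow2 by lra. field. }
    assert (Ox : Om x = 1 - Q / 2).
    { rewrite Ps in C. nra. }
    destruct x as [a b c d e]. simpl in *. unfold P1plus. fold Q.
    rewrite Ps, Sm0, Np0, Nx, Ox. reflexivity.
Qed.
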